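(* Every (fork, dart)-free graph $G$ satisfies $\chi(G)\le \omega(G)^2$.
   Context: All graphs are finite and simple; $\chi$ is chromatic number, $\omega$ clique number. The fork is obtained from $K_{1,3}$ by subdividing one edge once. The dart is the graph on $v_1,\dots,v_5$ where $v_1$ is adjacent to $v_2,v_3,v_4$, the set $\{v_2,v_3,v_4\}$ is stable, and $v_5$ is adjacent to $v_1,v_3,v_4$ but not to $v_2$. $G$ is $(H_1,H_2)$-free if it has no induced subgraph isomorphic to $H_1$ or $H_2$. *)

(* Defs.v *)
From mathcomp Require Import all_boot.
Set Implicit Arguments. Unset Strict Implicit. Unset Printing Implicit Defensive.

Definition simple_graph (T : finType) (E : rel T) : Prop :=
  symmetric E /\ irreflexive E.

Definition induced_sub (U : finType) (F : rel U) (T : finType) (E : rel T) : Prop :=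
  exists f : U -> T, injective f /\ forall x y, E (f x) (f y) = F x y.

(* Fork: vertices 0..4; 0 = centre of K_{1,3} with leaves 1,2,3;
   the edge 0-3 is subdivided by vertex 4.  Edges: 01 02 04 43. *)
Definition fork_edges : seq (nat * nat) := [:: (0,1); (0,2); (0,4); (4,3)].
(* Dart on v1..v5 (here 0..4): v1~v2,v3,v4 ; v5~v1,v3,v4. *)
Definition dart_edges : seq (nat * nat) :=
  [:: (0,1); (0,2); (0,3); (4,0); (4,2); (4,3)].

Definition rel_of_edges (es : seq (nat * nat)) : rel 'I_5 :=
  fun x y => ((val x, val y) \in es) || ((val y, val x) \in es).

Definition fork : rel 'I_5 := rel_of_edges fork_edges.
Definition dart : rel 'I_5 := rel_of_edges dart_edges.

Definition H_free (U : finType) (F : rel U) (T : finType) (E : rel T) : Prop :=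
  ~ induced_sub F E.

Definition colorable (T : finType) (E : rel T) (k : nat) : bool :=
  [exists c : {ffun T -> 'I_k}, [forall x, forall y, E x y ==> (c x != c y)]].

Lemma colorable_card (T : finType) (E : rel T) :
  irreflexive E -> exists k, colorable E k.
Proof.
move=> irr; exists #|T|; apply/existsP; exists [ffun x => enum_rank x].
apply/forallP => x; apply/forallP => y; apply/implyP => Exy; rewrite !ffunE.
apply/negP => /eqP /enum_rank_inj eq_xy; by move: Exy; rewrite eq_xy irr.
Qed.

Definition chi (T : finType) (E : rel T) (irr : irreflexive E) : nat :=
  ex_minn (colorable_card irr).

Definition clique (T : finType) (E : rel T) (A : {set T}) : bool :=
  [forall x in A, forall y in A, (x != y) ==> E x y].

Definition omega (T : finType) (E : rel T) : nat :=
  \max_(A : {set T} | clique E A) #|A|.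

(* Main.v *)
Require Import Defs.
From mathcomp Require Import all_boot zify.
Set Implicit Arguments. Unset Strict Implicit. Unset Printing Implicit Defensive.

Section G.
Variable T : finType.
Variable E : rel T.
Hypothesis Esym : symmetric E.
Hypothesis Eirr : irreflexive E.
Hypothesis hfork : H_free fork E.
Hypothesis hdart : H_free dart E.

Lemma flipE x y b : E x y = b -> E y x = b.
Proof. by rewrite Esym. Qed.

Lemma adj_neq x y : E x y = true -> x != y.
Proof. by apply: contraTneq => ->; rewrite Eirr. Qed.

Lemma dist_neq z x y : E z x = true -> E z y = false -> x != y.
Proof. by move=> h1 h2; apply/eqP => exy; rewrite exy h2 in h1. Qed.

Lemma induce5 (F : rel 'I_5) x0 x1 x2 x3 x4 :
  (forall i j : 'I_5, i != j -> nth x0 [:: x0; x1; x2; x3; x4] i != nth x0 [:: x0; x1; x2; x3; x4] j) ->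
  (forall i j : 'I_5, E (nth x0 [:: x0; x1; x2; x3; x4] i) (nth x0 [:: x0; x1; x2; x3; x4] j) = F i j) ->
  induced_sub F E.
Proof.
move=> inj FF; exists (fun i : 'I_5 => nth x0 [:: x0; x1; x2; x3; x4] i); split => // i j eij.
by case: (eqVneq i j) => // /inj; rewrite eij eqxx.
Qed.

Lemma forkC x0 x1 x2 x3 x4 :
  E x0 x1 = true -> E x0 x2 = true -> E x0 x4 = true -> E x4 x3 = true ->
  E x0 x3 = false -> E x1 x2 = false -> E x1 x3 = false -> E x1 x4 = false ->
  E x2 x3 = false -> E x2 x4 = false -> x1 != x2 -> False.
Proof.
move=> h01 h02 h04 h43 h03 h12 h13 h14 h23 h24 n12.
have sy : forall x y b, E x y = b -> E y x = b by move=> *; rewrite Esym.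
have i0 := Eirr x0; have i1 := Eirr x1; have i2 := Eirr x2; have i3 := Eirr x3; have i4 := Eirr x4.
apply: hfork; apply: (@induce5 _ x0 x1 x2 x3 x4).
  move=> [[|[|[|[|[|?]]]]] ?] [[|[|[|[|[|?]]]]] ?] //= _; apply/eqP => e; subst;
  try congruence; rewrite ?eqxx in n12; try done;
  move: h01 h02 h04 h43 h03 h12 h13 h14 h23 h24; rewrite ?(Esym x3 x4) ?(Esym x2 x3); congruence.
by move=> [[|[|[|[|[|?]]]]] ?] [[|[|[|[|[|?]]]]] ?] //=;
     rewrite /fork /rel_of_edges /= ?i0 ?i1 ?i2 ?i3 ?i4 ?h01 ?h02 ?h04 ?h43 ?h03 ?h12 ?h13 ?h14 ?h23 ?h24
       ?(sy _ _ _ h01) ?(sy _ _ _ h02) ?(sy _ _ _ h04) ?(sy _ _ _ h43) ?(sy _ _ _ h03)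
       ?(sy _ _ _ h12) ?(sy _ _ _ h13) ?(sy _ _ _ h14) ?(sy _ _ _ h23) ?(sy _ _ _ h24).
Qed.

Lemma dartC x0 x1 x2 x3 x4 :
  E x0 x1 = true -> E x0 x2 = true -> E x0 x3 = true -> E x0 x4 = true ->
  E x4 x2 = true -> E x4 x3 = true ->
  E x1 x2 = false -> E x1 x3 = false -> E x2 x3 = false -> E x1 x4 = false -> x2 != x3 -> False.
Proof.
move=> h01 h02 h03 h04 h42 h43 h12 h13 h23 h14 n23.
have sy : forall x y b, E x y = b -> E y x = b by move=> *; rewrite Esym.
have i0 := Eirr x0; have i1 := Eirr x1; have i2 := Eirr x2; have i3 := Eirr x3; have i4 := Eirr x4.
apply: hdart; apply: (@induce5 _ x0 x1 x2 x3 x4).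
  move=> [[|[|[|[|[|?]]]]] ?] [[|[|[|[|[|?]]]]] ?] //= _; apply/eqP => e; subst;
  try congruence; rewrite ?eqxx in n23; try done;
  move: h01 h02 h03 h04 h42 h43 h12 h13 h23 h14; rewrite ?(Esym x4 x1) ?(Esym x3 x4) ?(Esym x2 x4) ?(Esym x2 x3); congruence.
by move=> [[|[|[|[|[|?]]]]] ?] [[|[|[|[|[|?]]]]] ?] //=;
     rewrite /dart /rel_of_edges /= ?i0 ?i1 ?i2 ?i3 ?i4 ?h01 ?h02 ?h03 ?h04 ?h42 ?h43 ?h12 ?h13 ?h23 ?h14
       ?(sy _ _ _ h01) ?(sy _ _ _ h02) ?(sy _ _ _ h03) ?(sy _ _ _ h04) ?(sy _ _ _ h42)
       ?(sy _ _ _ h43) ?(sy _ _ _ h12) ?(sy _ _ _ h13) ?(sy _ _ _ h23) ?(sy _ _ _ h14).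
Qed.

Lemma nsym (x y : T) : x != y -> y != x.
Proof. by rewrite eq_sym. Qed.

Lemma cf1 (v a b c y1 y2 y3 : T) :
  (E v a) ->
  (E v b) ->
  (E v c) ->
  (E v y1) ->
  (E v y2) ->
  (E v y3) ->
  (E y1 y2) ->
  (E y2 y3) ->
  (~~ E a b) ->
  (~~ E a c) ->
  (~~ E b c) ->
  (~~ E y1 y3) ->
  (a != b) ->
  (a != c) ->
  (b != c) ->
  (y1 != y3) ->
  (~~ E y1 a || ~~ E y1 b || ~~ E y1 c) ->
  (~~ E y2 a || ~~ E y2 b || ~~ E y2 c) ->
  (~~ E y3 a || ~~ E y3 b || ~~ E y3 c) -> False.
Proof.
move=> p0 p1 p2 p3 p4 p5 p6 p7 n8 n9 n10 n11 d12 d13 d14 d15 c16 c17 c18.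
move/negbTE: n8 => n8.
move/negbTE: n9 => n9.
move/negbTE: n10 => n10.
move/negbTE: n11 => n11.
case H0: (E a y1).
{
  case H1: (E a y2).
  {
    case H2: (E a y3).
    {
      case H3: (E b y1).
      {
        case H4: (E c y1).
        {
          by move: c16; rewrite (flipE H0) (flipE H3) (flipE H4).
        }
        {
          by apply: (dartC (x0:=v) (x1:=c) (x2:=a) (x3:=b) (x4:=y1) p2 p0 p1 p3 (flipE H0) (flipE H3) (flipE n9) (flipE n10) n8 H4 d12).
        }
      }
      {
        case H4: (E b y3).
        {
          case H5: (E c y3).
          {
            by move: c18; rewrite (flipE H2) (flipE H4) (flipE H5).
          }
          {
            by apply: (dartC (x0:=v) (x1:=c) (x2:=a) (x3:=b) (x4:=y3) p2 p0 p1 p5 (flipE H2) (flipE H4) (flipE n9) (flipE n10) n8 H5 d12).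
          }
        }
        {
          by apply: (dartC (x0:=v) (x1:=b) (x2:=y1) (x3:=y3) (x4:=a) p1 p3 p5 p0 H0 H2 H3 H4 n11 (flipE n8) d15).
        }
      }
    }
    {
      case H3: (E b y1).
      {
        case H4: (E c y1).
        {
          by move: c16; rewrite (flipE H0) (flipE H3) (flipE H4).
        }
        {
          by apply: (dartC (x0:=v) (x1:=c) (x2:=a) (x3:=b) (x4:=y1) p2 p0 p1 p3 (flipE H0) (flipE H3) (flipE n9) (flipE n10) n8 H4 d12).
        }
      }
      {
        case H4: (E c y1).
        {
          by apply: (dartC (x0:=v) (x1:=b) (x2:=a) (x3:=c) (x4:=y1) p1 p0 p2 p3 (flipE H0) (flipE H4) (flipE n8) n10 n9 H3 d13).
        }
        {
          case H5: (E b y2).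
          {
            case H6: (E c y2).
            {
              by move: c17; rewrite (flipE H1) (flipE H5) (flipE H6).
            }
            {
              by apply: (dartC (x0:=v) (x1:=c) (x2:=a) (x3:=b) (x4:=y2) p2 p0 p1 p4 (flipE H1) (flipE H5) (flipE n9) (flipE n10) n8 H6 d12).
            }
          }
          {
            case H6: (E b y3).
            {
              case H7: (E c y2).
              {
                by apply: (dartC (x0:=v) (x1:=b) (x2:=a) (x3:=c) (x4:=y2) p1 p0 p2 p4 (flipE H1) (flipE H7) (flipE n8) n10 n9 H5 d13).
              }
              {
                case H8: (E c y3).
                {
                  by apply: (forkC (x0:=y3) (x1:=b) (x2:=c) (x3:=a) (x4:=y2) (flipE H6) (flipE H8) (flipE p7) (flipE H1) (flipE H2) n10 (flipE n8) H5 (flipE n9) H7 d14).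
                }
                {
                  by apply: (dartC (x0:=v) (x1:=c) (x2:=a) (x3:=y3) (x4:=y2) p2 p0 p5 p4 (flipE H1) p7 (flipE n9) H8 H2 H7 (nsym (dist_neq H6 (flipE n8)))).
                }
              }
            }
            {
              by apply: (dartC (x0:=v) (x1:=b) (x2:=a) (x3:=y3) (x4:=y2) p1 p0 p5 p4 (flipE H1) p7 (flipE n8) H6 H2 H5 (dist_neq (flipE H0) n11)).
            }
          }
        }
      }
    }
  }
  {
    case H2: (E a y3).
    {
      case H3: (E b y1).
      {
        case H4: (E c y1).
        {
          by move: c16; rewrite (flipE H0) (flipE H3) (flipE H4).
        }
        {
          by apply: (dartC (x0:=v) (x1:=c) (x2:=a) (x3:=b) (x4:=y1) p2 p0 p1 p3 (flipE H0) (flipE H3) (flipE n9) (flipE n10) n8 H4 d12).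
        }
      }
      {
        case H4: (E b y3).
        {
          case H5: (E c y3).
          {
            by move: c18; rewrite (flipE H2) (flipE H4) (flipE H5).
          }
          {
            by apply: (dartC (x0:=v) (x1:=c) (x2:=a) (x3:=b) (x4:=y3) p2 p0 p1 p5 (flipE H2) (flipE H4) (flipE n9) (flipE n10) n8 H5 d12).
          }
        }
        {
          by apply: (dartC (x0:=v) (x1:=b) (x2:=y1) (x3:=y3) (x4:=a) p1 p3 p5 p0 H0 H2 H3 H4 n11 (flipE n8) d15).
        }
      }
    }
    {
      case H3: (E b y1).
      {
        case H4: (E c y1).
        {
          by move: c16; rewrite (flipE H0) (flipE H3) (flipE H4).
        }
        {
          by apply: (dartC (x0:=v) (x1:=c) (x2:=a) (x3:=b) (x4:=y1) p2 p0 p1 p3 (flipE H0) (flipE H3) (flipE n9) (flipE n10) n8 H4 d12).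
        }
      }
      {
        case H4: (E b y2).
        {
          case H5: (E c y1).
          {
            by apply: (dartC (x0:=v) (x1:=b) (x2:=a) (x3:=c) (x4:=y1) p1 p0 p2 p3 (flipE H0) (flipE H5) (flipE n8) n10 n9 H3 d13).
          }
          {
            case H6: (E c y2).
            {
              by apply: (forkC (x0:=y2) (x1:=b) (x2:=c) (x3:=a) (x4:=y1) (flipE H4) (flipE H6) (flipE p6) (flipE H0) (flipE H1) n10 (flipE n8) H3 (flipE n9) H5 d14).
            }
            {
              by apply: (dartC (x0:=v) (x1:=c) (x2:=a) (x3:=y2) (x4:=y1) p2 p0 p4 p3 (flipE H0) p6 (flipE n9) H6 H1 H5 (nsym (dist_neq H4 (flipE n8)))).
            }
          }
        }
        {
          by apply: (dartC (x0:=v) (x1:=b) (x2:=a) (x3:=y2) (x4:=y1) p1 p0 p4 p3 (flipE H0) p6 (flipE n8) H4 H1 H3 (nsym (dist_neq (flipE p7) (flipE H2)))).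
        }
      }
    }
  }
}
{
  case H1: (E a y2).
  {
    case H2: (E a y3).
    {
      case H3: (E b y1).
      {
        case H4: (E c y1).
        {
          by apply: (dartC (x0:=v) (x1:=a) (x2:=b) (x3:=c) (x4:=y1) p0 p1 p2 p3 (flipE H3) (flipE H4) n8 n9 n10 H0 d14).
        }
        {
          case H5: (E c y2).
          {
            case H6: (E b y2).
            {
              by move: c17; rewrite (flipE H1) (flipE H6) (flipE H5).
            }
            {
              by apply: (forkC (x0:=y2) (x1:=a) (x2:=c) (x3:=b) (x4:=y1) (flipE H1) (flipE H5) (flipE p6) (flipE H3) (flipE H6) n9 n8 H0 (flipE n10) H4 d13).
            }
          }
          {
            by apply: (dartC (x0:=v) (x1:=c) (x2:=a) (x3:=y1) (x4:=y2) p2 p0 p3 p4 (flipE H1) (flipE p6) (flipE n9) H4 H0 H5 (nsym (dist_neq H3 (flipE n8)))).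
          }
        }
      }
      {
        case H4: (E b y2).
        {
          case H5: (E c y2).
          {
            by move: c17; rewrite (flipE H1) (flipE H4) (flipE H5).
          }
          {
            by apply: (dartC (x0:=v) (x1:=c) (x2:=a) (x3:=b) (x4:=y2) p2 p0 p1 p4 (flipE H1) (flipE H4) (flipE n9) (flipE n10) n8 H5 d12).
          }
        }
        {
          by apply: (dartC (x0:=v) (x1:=b) (x2:=a) (x3:=y1) (x4:=y2) p1 p0 p3 p4 (flipE H1) (flipE p6) (flipE n8) H3 H0 H4 (dist_neq (flipE H2) (flipE n11))).
        }
      }
    }
    {
      case H3: (E b y1).
      {
        case H4: (E b y3).
        {
          by apply: (dartC (x0:=v) (x1:=a) (x2:=y1) (x3:=y3) (x4:=b) p0 p3 p5 p1 H3 H4 H0 H2 n11 n8 d15).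
        }
        {
          case H5: (E c y1).
          {
            by apply: (dartC (x0:=v) (x1:=a) (x2:=b) (x3:=c) (x4:=y1) p0 p1 p2 p3 (flipE H3) (flipE H5) n8 n9 n10 H0 d14).
          }
          {
            case H6: (E c y2).
            {
              case H7: (E b y2).
              {
                by move: c17; rewrite (flipE H1) (flipE H7) (flipE H6).
              }
              {
                by apply: (forkC (x0:=y2) (x1:=a) (x2:=c) (x3:=b) (x4:=y1) (flipE H1) (flipE H6) (flipE p6) (flipE H3) (flipE H7) n9 n8 H0 (flipE n10) H5 d13).
              }
            }
            {
              by apply: (dartC (x0:=v) (x1:=c) (x2:=a) (x3:=y1) (x4:=y2) p2 p0 p3 p4 (flipE H1) (flipE p6) (flipE n9) H5 H0 H6 (nsym (dist_neq H3 (flipE n8)))).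
            }
          }
        }
      }
      {
        case H4: (E b y2).
        {
          case H5: (E c y2).
          {
            by move: c17; rewrite (flipE H1) (flipE H4) (flipE H5).
          }
          {
            by apply: (dartC (x0:=v) (x1:=c) (x2:=a) (x3:=b) (x4:=y2) p2 p0 p1 p4 (flipE H1) (flipE H4) (flipE n9) (flipE n10) n8 H5 d12).
          }
        }
        {
          case H5: (E b y3).
          {
            case H6: (E c y1).
            {
              by apply: (forkC (x0:=y2) (x1:=a) (x2:=y1) (x3:=b) (x4:=y3) (flipE H1) (flipE p6) p7 (flipE H5) (flipE H4) H0 n8 H2 (flipE H3) n11 (nsym (dist_neq H6 (flipE n9)))).
            }
            {
              case H7: (E c y2).
              {
                by apply: (dartC (x0:=v) (x1:=b) (x2:=a) (x3:=c) (x4:=y2) p1 p0 p2 p4 (flipE H1) (flipE H7) (flipE n8) n10 n9 H4 d13).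
              }
              {
                case H8: (E c y3).
                {
                  by apply: (forkC (x0:=y3) (x1:=b) (x2:=c) (x3:=a) (x4:=y2) (flipE H5) (flipE H8) (flipE p7) (flipE H1) (flipE H2) n10 (flipE n8) H4 (flipE n9) H7 d14).
                }
                {
                  by apply: (dartC (x0:=v) (x1:=c) (x2:=a) (x3:=y3) (x4:=y2) p2 p0 p5 p4 (flipE H1) p7 (flipE n9) H8 H2 H7 (nsym (dist_neq H5 (flipE n8)))).
                }
              }
            }
          }
          {
            by apply: (dartC (x0:=v) (x1:=b) (x2:=y1) (x3:=y3) (x4:=y2) p1 p3 p5 p4 (flipE p6) p7 H3 H5 n11 H4 d15).
          }
        }
      }
    }
  }
  {
    case H2: (E a y3).
    {
      case H3: (E b y1).
      {
        case H4: (E c y1).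
        {
          by apply: (dartC (x0:=v) (x1:=a) (x2:=b) (x3:=c) (x4:=y1) p0 p1 p2 p3 (flipE H3) (flipE H4) n8 n9 n10 H0 d14).
        }
        {
          case H5: (E c y2).
          {
            by apply: (dartC (x0:=v) (x1:=a) (x2:=c) (x3:=y1) (x4:=y2) p0 p2 p3 p4 (flipE H5) (flipE p6) n9 H0 H4 H1 (nsym (dist_neq H3 n10))).
          }
          {
            case H6: (E c y3).
            {
              by apply: (forkC (x0:=y3) (x1:=a) (x2:=c) (x3:=y1) (x4:=y2) (flipE H2) (flipE H6) (flipE p7) (flipE p6) (flipE n11) n9 H0 H1 H4 H5 d13).
            }
            {
              by apply: (dartC (x0:=v) (x1:=c) (x2:=a) (x3:=y2) (x4:=y3) p2 p0 p4 p5 (flipE H2) (flipE p7) (flipE n9) H5 H1 H6 (nsym (dist_neq p6 (flipE H0)))).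
            }
          }
        }
      }
      {
        case H4: (E b y3).
        {
          by apply: (dartC (x0:=v) (x1:=y1) (x2:=a) (x3:=b) (x4:=y3) p3 p0 p1 p5 (flipE H2) (flipE H4) (flipE H0) (flipE H3) n8 n11 d12).
        }
        {
          case H5: (E b y2).
          {
            case H6: (E c y1).
            {
              by apply: (forkC (x0:=y2) (x1:=b) (x2:=y1) (x3:=a) (x4:=y3) (flipE H5) (flipE p6) p7 (flipE H2) (flipE H1) H3 (flipE n8) H4 (flipE H0) n11 (nsym (dist_neq H6 (flipE n10)))).
            }
            {
              case H7: (E c y2).
              {
                by apply: (dartC (x0:=v) (x1:=a) (x2:=b) (x3:=c) (x4:=y2) p0 p1 p2 p4 (flipE H5) (flipE H7) n8 n9 n10 H1 d14).
              }
              {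
                case H8: (E c y3).
                {
                  by apply: (forkC (x0:=y3) (x1:=a) (x2:=c) (x3:=b) (x4:=y2) (flipE H2) (flipE H8) (flipE p7) (flipE H5) (flipE H4) n9 n8 H1 (flipE n10) H7 d13).
                }
                {
                  by apply: (dartC (x0:=v) (x1:=c) (x2:=a) (x3:=y2) (x4:=y3) p2 p0 p4 p5 (flipE H2) (flipE p7) (flipE n9) H7 H1 H8 (nsym (dist_neq H5 (flipE n8)))).
                }
              }
            }
          }
          {
            by apply: (dartC (x0:=v) (x1:=b) (x2:=a) (x3:=y2) (x4:=y3) p1 p0 p4 p5 (flipE H2) (flipE p7) (flipE n8) H5 H1 H4 (nsym (dist_neq p6 (flipE H0)))).
          }
        }
      }
    }
    {
      by apply: (dartC (x0:=v) (x1:=a) (x2:=y1) (x3:=y3) (x4:=y2) p0 p3 p5 p4 (flipE p6) p7 H0 H2 n11 H1 d15).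
    }
  }
}
Qed.

Lemma cf2 (v a b c y x : T) :
  (E v a) ->
  (E v b) ->
  (E v c) ->
  (E v y) ->
  (E x y) ->
  (~~ E a b) ->
  (~~ E a c) ->
  (~~ E b c) ->
  (~~ E x v) ->
  (~~ E x a) ->
  (~~ E x b) ->
  (a != b) ->
  (a != c) ->
  (b != c) ->
  (~~ E y a || ~~ E y b || ~~ E y c) -> False.
Proof.
move=> p0 p1 p2 p3 p4 n5 n6 n7 n8 n9 n10 d11 d12 d13 c14.
move/negbTE: n5 => n5.
move/negbTE: n6 => n6.
move/negbTE: n7 => n7.
move/negbTE: n8 => n8.
move/negbTE: n9 => n9.
move/negbTE: n10 => n10.
case H0: (E c x).
{
  by apply: (forkC (x0:=v) (x1:=a) (x2:=b) (x3:=x) (x4:=c) p0 p1 p2 H0 (flipE n8) n5 (flipE n9) n6 (flipE n10) n7 d11).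
}
{
  case H1: (E a y).
  {
    case H2: (E b y).
    {
      by apply: (dartC (x0:=y) (x1:=x) (x2:=a) (x3:=b) (x4:=v) (flipE p4) (flipE H1) (flipE H2) (flipE p3) p0 p1 n9 n10 n5 n8 d11).
    }
    {
      case H3: (E c y).
      {
        by apply: (dartC (x0:=v) (x1:=b) (x2:=a) (x3:=c) (x4:=y) p1 p0 p2 p3 (flipE H1) (flipE H3) (flipE n5) n7 n6 H2 d12).
      }
      {
        by apply: (forkC (x0:=v) (x1:=b) (x2:=c) (x3:=x) (x4:=y) p1 p2 p3 (flipE p4) (flipE n8) n7 (flipE n10) H2 H0 H3 d13).
      }
    }
  }
  {
    case H2: (E b y).
    {
      case H3: (E c y).
      {
        by apply: (dartC (x0:=v) (x1:=a) (x2:=b) (x3:=c) (x4:=y) p0 p1 p2 p3 (flipE H2) (flipE H3) n5 n6 n7 H1 d13).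
      }
      {
        by apply: (forkC (x0:=v) (x1:=a) (x2:=c) (x3:=x) (x4:=y) p0 p2 p3 (flipE p4) (flipE n8) n6 (flipE n9) H1 H0 H3 d12).
      }
    }
    {
      by apply: (forkC (x0:=v) (x1:=a) (x2:=b) (x3:=x) (x4:=y) p0 p1 p3 (flipE p4) (flipE n8) n5 (flipE n9) H1 (flipE n10) H2 d11).
    }
  }
}
Qed.

Lemma cf3 (v a b c x x2 s1 s2 s3 : T) :
  (E v a) ->
  (E v b) ->
  (E v c) ->
  (E x x2) ->
  (E x b) ->
  (E x c) ->
  (E x2 a) ->
  (E x2 c) ->
  (E x s1) ->
  (E x s2) ->
  (E x s3) ->
  (~~ E a b) ->
  (~~ E a c) ->
  (~~ E b c) ->
  (~~ E x a) ->
  (~~ E x2 b) ->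
  (~~ E x v) ->
  (~~ E x2 v) ->
  (~~ E s1 s2) ->
  (~~ E s1 s3) ->
  (~~ E s2 s3) ->
  (a != b) ->
  (a != c) ->
  (b != c) ->
  (s1 != s2) ->
  (s1 != s3) ->
  (s2 != s3) -> False.
Proof.
move=> p0 p1 p2 p3 p4 p5 p6 p7 p8 p9 p10 n11 n12 n13 n14 n15 n16 n17 n18 n19 n20 d21 d22 d23 d24 d25 d26.
move/negbTE: n11 => n11.
move/negbTE: n12 => n12.
move/negbTE: n13 => n13.
move/negbTE: n14 => n14.
move/negbTE: n15 => n15.
move/negbTE: n16 => n16.
move/negbTE: n17 => n17.
move/negbTE: n18 => n18.
move/negbTE: n19 => n19.
move/negbTE: n20 => n20.
case H0: (E v s1).
{
  case H1: (E v s2).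
  {
    case H2: (E v s3).
    {
      case H3: (E a s1).
      {
        case H4: (E a s2).
        {
          case H5: (E a s3).
          {
            case H6: (E b s1).
            {
              case H7: (E c s1).
              {
                by apply: (dartC (x0:=s1) (x1:=a) (x2:=b) (x3:=c) (x4:=x) (flipE H3) (flipE H6) (flipE H7) (flipE p8) p4 p5 n11 n12 n13 (flipE n14) d23).
              }
              {
                by apply: (dartC (x0:=v) (x1:=c) (x2:=a) (x3:=b) (x4:=s1) p2 p0 p1 H0 (flipE H3) (flipE H6) (flipE n12) (flipE n13) n11 H7 d21).
              }
            }
            {
              case H7: (E c s1).
              {
                by apply: (dartC (x0:=v) (x1:=b) (x2:=a) (x3:=c) (x4:=s1) p1 p0 p2 H0 (flipE H3) (flipE H7) (flipE n11) n13 n12 H6 d22).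
              }
              {
                by apply: (forkC (x0:=x) (x1:=b) (x2:=c) (x3:=a) (x4:=s1) p4 p5 p8 (flipE H3) n14 n13 (flipE n11) H6 (flipE n12) H7 d23).
              }
            }
          }
          {
            by apply: (dartC (x0:=v) (x1:=s3) (x2:=s1) (x3:=s2) (x4:=a) H2 H0 H1 p0 H3 H4 (flipE n19) (flipE n20) n18 (flipE H5) d24).
          }
        }
        {
          case H5: (E a s3).
          {
            by apply: (dartC (x0:=v) (x1:=s2) (x2:=s1) (x3:=s3) (x4:=a) H1 H0 H2 p0 H3 H5 (flipE n18) n20 n19 (flipE H4) d25).
          }
          {
            by apply: (forkC (x0:=x) (x1:=s2) (x2:=s3) (x3:=a) (x4:=s1) p9 p10 p8 (flipE H3) n14 n20 (flipE H4) (flipE n18) (flipE H5) (flipE n19) d26).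
          }
        }
      }
      {
        case H4: (E a s2).
        {
          case H5: (E a s3).
          {
            by apply: (dartC (x0:=v) (x1:=s1) (x2:=s2) (x3:=s3) (x4:=a) H0 H1 H2 p0 H4 H5 n18 n19 n20 (flipE H3) d26).
          }
          {
            by apply: (forkC (x0:=x) (x1:=s1) (x2:=s3) (x3:=a) (x4:=s2) p8 p10 p9 (flipE H4) n14 n19 (flipE H3) n18 (flipE H5) (flipE n20) d25).
          }
        }
        {
          case H5: (E a s3).
          {
            by apply: (forkC (x0:=x) (x1:=s1) (x2:=s2) (x3:=a) (x4:=s3) p8 p9 p10 (flipE H5) n14 n18 (flipE H3) n19 (flipE H4) n20 d24).
          }
          {
            case H6: (E b s1).
            {
              case H7: (E b s2).
              {
                by apply: (dartC (x0:=v) (x1:=a) (x2:=s1) (x3:=s2) (x4:=b) p0 H0 H1 p1 H6 H7 H3 H4 n18 n11 d24).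
              }
              {
                case H8: (E b s3).
                {
                  by apply: (dartC (x0:=v) (x1:=a) (x2:=s1) (x3:=s3) (x4:=b) p0 H0 H2 p1 H6 H8 H3 H5 n19 n11 d25).
                }
                {
                  case H9: (E c s1).
                  {
                    by apply: (dartC (x0:=v) (x1:=a) (x2:=b) (x3:=c) (x4:=s1) p0 p1 p2 H0 (flipE H6) (flipE H9) n11 n12 n13 H3 d23).
                  }
                  {
                    case H10: (E x2 s1).
                    {
                      by apply: (forkC (x0:=x2) (x1:=a) (x2:=c) (x3:=b) (x4:=s1) p6 p7 H10 (flipE H6) n15 n12 n11 H3 (flipE n13) H9 d22).
                    }
                    {
                      case H11: (E x2 s2).
                      {
                        case H12: (E x2 s3).
                        {
                          by apply: (dartC (x0:=x) (x1:=b) (x2:=s2) (x3:=s3) (x4:=x2) p4 p9 p10 p3 H11 H12 H7 H8 n20 (flipE n15) d26).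
                        }
                        {
                          by apply: (forkC (x0:=v) (x1:=b) (x2:=s3) (x3:=x2) (x4:=a) p1 H2 p0 (flipE p6) (flipE n17) H8 (flipE n15) (flipE n11) (flipE H12) (flipE H5) (dist_neq (flipE H6) n19)).
                        }
                      }
                      {
                        by apply: (forkC (x0:=v) (x1:=b) (x2:=s2) (x3:=x2) (x4:=a) p1 H1 p0 (flipE p6) (flipE n17) H7 (flipE n15) (flipE n11) (flipE H11) (flipE H4) (dist_neq (flipE H6) n18)).
                      }
                    }
                  }
                }
              }
            }
            {
              case H7: (E b s2).
              {
                case H8: (E b s3).
                {
                  by apply: (dartC (x0:=v) (x1:=a) (x2:=s2) (x3:=s3) (x4:=b) p0 H1 H2 p1 H7 H8 H4 H5 n20 n11 d26).
                }
                {
                  case H9: (E c s2).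
                  {
                    by apply: (dartC (x0:=v) (x1:=a) (x2:=b) (x3:=c) (x4:=s2) p0 p1 p2 H1 (flipE H7) (flipE H9) n11 n12 n13 H4 d23).
                  }
                  {
                    case H10: (E x2 s1).
                    {
                      case H11: (E x2 s3).
                      {
                        by apply: (dartC (x0:=x) (x1:=b) (x2:=s1) (x3:=s3) (x4:=x2) p4 p8 p10 p3 H10 H11 H6 H8 n19 (flipE n15) d25).
                      }
                      {
                        by apply: (forkC (x0:=v) (x1:=b) (x2:=s3) (x3:=x2) (x4:=a) p1 H2 p0 (flipE p6) (flipE n17) H8 (flipE n15) (flipE n11) (flipE H11) (flipE H5) (dist_neq (flipE H7) n20)).
                      }
                    }
                    {
                      by apply: (forkC (x0:=v) (x1:=b) (x2:=s1) (x3:=x2) (x4:=a) p1 H0 p0 (flipE p6) (flipE n17) H6 (flipE n15) (flipE n11) (flipE H10) (flipE H3) (dist_neq (flipE H7) (flipE n18))).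
                    }
                  }
                }
              }
              {
                case H8: (E b s3).
                {
                  case H9: (E c s3).
                  {
                    by apply: (dartC (x0:=v) (x1:=a) (x2:=b) (x3:=c) (x4:=s3) p0 p1 p2 H2 (flipE H8) (flipE H9) n11 n12 n13 H5 d23).
                  }
                  {
                    case H10: (E x2 s1).
                    {
                      case H11: (E x2 s2).
                      {
                        by apply: (dartC (x0:=x) (x1:=b) (x2:=s1) (x3:=s2) (x4:=x2) p4 p8 p9 p3 H10 H11 H6 H7 n18 (flipE n15) d24).
                      }
                      {
                        by apply: (forkC (x0:=v) (x1:=b) (x2:=s2) (x3:=x2) (x4:=a) p1 H1 p0 (flipE p6) (flipE n17) H7 (flipE n15) (flipE n11) (flipE H11) (flipE H4) (dist_neq (flipE H8) (flipE n20))).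
                      }
                    }
                    {
                      by apply: (forkC (x0:=v) (x1:=b) (x2:=s1) (x3:=x2) (x4:=a) p1 H0 p0 (flipE p6) (flipE n17) H6 (flipE n15) (flipE n11) (flipE H10) (flipE H3) (dist_neq (flipE H8) (flipE n19))).
                    }
                  }
                }
                {
                  case H9: (E c s1).
                  {
                    case H10: (E c s2).
                    {
                      by apply: (dartC (x0:=v) (x1:=a) (x2:=s1) (x3:=s2) (x4:=c) p0 H0 H1 p2 H9 H10 H3 H4 n18 n12 d24).
                    }
                    {
                      case H11: (E c s3).
                      {
                        by apply: (dartC (x0:=v) (x1:=a) (x2:=s1) (x3:=s3) (x4:=c) p0 H0 H2 p2 H9 H11 H3 H5 n19 n12 d25).
                      }
                      {
                        case H12: (E x2 s1).
                        {
                          case H13: (E x2 s2).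
                          {
                            by apply: (dartC (x0:=x) (x1:=b) (x2:=c) (x3:=s2) (x4:=x2) p4 p5 p9 p3 p7 H13 n13 H7 H10 (flipE n15) (dist_neq (flipE H9) n18)).
                          }
                          {
                            case H14: (E x2 s3).
                            {
                              by apply: (dartC (x0:=x) (x1:=b) (x2:=c) (x3:=s3) (x4:=x2) p4 p5 p10 p3 p7 H14 n13 H8 H11 (flipE n15) (dist_neq (flipE H9) n19)).
                            }
                            {
                              by apply: (forkC (x0:=v) (x1:=s2) (x2:=s3) (x3:=x2) (x4:=a) H1 H2 p0 (flipE p6) (flipE n17) n20 (flipE H13) (flipE H4) (flipE H14) (flipE H5) d26).
                            }
                          }
                        }
                        {
                          by apply: (forkC (x0:=v) (x1:=b) (x2:=s1) (x3:=x2) (x4:=a) p1 H0 p0 (flipE p6) (flipE n17) H6 (flipE n15) (flipE n11) (flipE H12) (flipE H3) (nsym (dist_neq H9 (flipE n13)))).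
                        }
                      }
                    }
                  }
                  {
                    case H10: (E c s2).
                    {
                      case H11: (E c s3).
                      {
                        by apply: (dartC (x0:=v) (x1:=a) (x2:=s2) (x3:=s3) (x4:=c) p0 H1 H2 p2 H10 H11 H4 H5 n20 n12 d26).
                      }
                      {
                        case H12: (E x2 s1).
                        {
                          by apply: (dartC (x0:=x) (x1:=b) (x2:=c) (x3:=s1) (x4:=x2) p4 p5 p8 p3 p7 H12 n13 H6 H9 (flipE n15) (dist_neq (flipE H10) (flipE n18))).
                        }
                        {
                          case H13: (E x2 s3).
                          {
                            by apply: (dartC (x0:=x) (x1:=b) (x2:=c) (x3:=s3) (x4:=x2) p4 p5 p10 p3 p7 H13 n13 H8 H11 (flipE n15) (dist_neq (flipE H10) n20)).
                          }
                          {
                            by apply: (forkC (x0:=v) (x1:=s1) (x2:=s3) (x3:=x2) (x4:=a) H0 H2 p0 (flipE p6) (flipE n17) n19 (flipE H12) (flipE H3) (flipE H13) (flipE H5) d25).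
                          }
                        }
                      }
                    }
                    {
                      case H11: (E c s3).
                      {
                        case H12: (E x2 s1).
                        {
                          by apply: (dartC (x0:=x) (x1:=b) (x2:=c) (x3:=s1) (x4:=x2) p4 p5 p8 p3 p7 H12 n13 H6 H9 (flipE n15) (dist_neq (flipE H11) (flipE n19))).
                        }
                        {
                          case H13: (E x2 s2).
                          {
                            by apply: (dartC (x0:=x) (x1:=b) (x2:=c) (x3:=s2) (x4:=x2) p4 p5 p9 p3 p7 H13 n13 H7 H10 (flipE n15) (dist_neq (flipE H11) (flipE n20))).
                          }
                          {
                            by apply: (forkC (x0:=v) (x1:=s1) (x2:=s2) (x3:=x2) (x4:=a) H0 H1 p0 (flipE p6) (flipE n17) n18 (flipE H12) (flipE H3) (flipE H13) (flipE H4) d24).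
                          }
                        }
                      }
                      {
                        case H12: (E x2 s1).
                        {
                          case H13: (E x2 s2).
                          {
                            by apply: (dartC (x0:=x) (x1:=b) (x2:=s1) (x3:=s2) (x4:=x2) p4 p8 p9 p3 H12 H13 H6 H7 n18 (flipE n15) d24).
                          }
                          {
                            case H14: (E x2 s3).
                            {
                              by apply: (dartC (x0:=x) (x1:=b) (x2:=s1) (x3:=s3) (x4:=x2) p4 p8 p10 p3 H12 H14 H6 H8 n19 (flipE n15) d25).
                            }
                            {
                              by apply: (forkC (x0:=v) (x1:=s2) (x2:=s3) (x3:=x2) (x4:=a) H1 H2 p0 (flipE p6) (flipE n17) n20 (flipE H13) (flipE H4) (flipE H14) (flipE H5) d26).
                            }
                          }
                        }
                        {
                          case H13: (E x2 s2).
                          {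
                            case H14: (E x2 s3).
                            {
                              by apply: (dartC (x0:=x) (x1:=b) (x2:=s2) (x3:=s3) (x4:=x2) p4 p9 p10 p3 H13 H14 H7 H8 n20 (flipE n15) d26).
                            }
                            {
                              by apply: (forkC (x0:=v) (x1:=s1) (x2:=s3) (x3:=x2) (x4:=a) H0 H2 p0 (flipE p6) (flipE n17) n19 (flipE H12) (flipE H3) (flipE H14) (flipE H5) d25).
                            }
                          }
                          {
                            by apply: (forkC (x0:=v) (x1:=s1) (x2:=s2) (x3:=x2) (x4:=a) H0 H1 p0 (flipE p6) (flipE n17) n18 (flipE H12) (flipE H3) (flipE H13) (flipE H4) d24).
                          }
                        }
                      }
                    }
                  }
                }
              }
            }
          }
        }
      }
    }
    {
      case H3: (E a s1).
      {
        case H4: (E a s2).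
        {
          case H5: (E a s3).
          {
            by apply: (dartC (x0:=a) (x1:=s3) (x2:=s1) (x3:=s2) (x4:=v) H5 H3 H4 (flipE p0) H0 H1 (flipE n19) (flipE n20) n18 (flipE H2) d24).
          }
          {
            case H6: (E b s1).
            {
              case H7: (E c s1).
              {
                by apply: (dartC (x0:=s1) (x1:=a) (x2:=b) (x3:=c) (x4:=x) (flipE H3) (flipE H6) (flipE H7) (flipE p8) p4 p5 n11 n12 n13 (flipE n14) d23).
              }
              {
                by apply: (dartC (x0:=v) (x1:=c) (x2:=a) (x3:=b) (x4:=s1) p2 p0 p1 H0 (flipE H3) (flipE H6) (flipE n12) (flipE n13) n11 H7 d21).
              }
            }
            {
              case H7: (E c s1).
              {
                by apply: (dartC (x0:=v) (x1:=b) (x2:=a) (x3:=c) (x4:=s1) p1 p0 p2 H0 (flipE H3) (flipE H7) (flipE n11) n13 n12 H6 d22).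
              }
              {
                by apply: (forkC (x0:=x) (x1:=b) (x2:=c) (x3:=a) (x4:=s1) p4 p5 p8 (flipE H3) n14 n13 (flipE n11) H6 (flipE n12) H7 d23).
              }
            }
          }
        }
        {
          case H5: (E a s3).
          {
            case H6: (E b s1).
            {
              case H7: (E c s1).
              {
                by apply: (dartC (x0:=s1) (x1:=a) (x2:=b) (x3:=c) (x4:=x) (flipE H3) (flipE H6) (flipE H7) (flipE p8) p4 p5 n11 n12 n13 (flipE n14) d23).
              }
              {
                by apply: (dartC (x0:=v) (x1:=c) (x2:=a) (x3:=b) (x4:=s1) p2 p0 p1 H0 (flipE H3) (flipE H6) (flipE n12) (flipE n13) n11 H7 d21).
              }
            }
            {
              case H7: (E c s1).
              {
                by apply: (dartC (x0:=v) (x1:=b) (x2:=a) (x3:=c) (x4:=s1) p1 p0 p2 H0 (flipE H3) (flipE H7) (flipE n11) n13 n12 H6 d22).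
              }
              {
                by apply: (forkC (x0:=x) (x1:=b) (x2:=c) (x3:=a) (x4:=s1) p4 p5 p8 (flipE H3) n14 n13 (flipE n11) H6 (flipE n12) H7 d23).
              }
            }
          }
          {
            by apply: (forkC (x0:=x) (x1:=s2) (x2:=s3) (x3:=a) (x4:=s1) p9 p10 p8 (flipE H3) n14 n20 (flipE H4) (flipE n18) (flipE H5) (flipE n19) d26).
          }
        }
      }
      {
        case H4: (E a s2).
        {
          case H5: (E a s3).
          {
            case H6: (E b s1).
            {
              case H7: (E c s1).
              {
                by apply: (dartC (x0:=v) (x1:=a) (x2:=b) (x3:=c) (x4:=s1) p0 p1 p2 H0 (flipE H6) (flipE H7) n11 n12 n13 H3 d23).
              }
              {
                case H8: (E c s2).
                {
                  by apply: (dartC (x0:=v) (x1:=s1) (x2:=a) (x3:=c) (x4:=s2) H0 p0 p2 H1 (flipE H4) (flipE H8) (flipE H3) (flipE H7) n12 n18 d22).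
                }
                {
                  by apply: (forkC (x0:=x) (x1:=c) (x2:=s1) (x3:=a) (x4:=s2) p5 p8 p9 (flipE H4) n14 H7 (flipE n12) H8 (flipE H3) n18 (nsym (dist_neq H6 n13))).
                }
              }
            }
            {
              case H7: (E b s2).
              {
                by apply: (dartC (x0:=v) (x1:=s1) (x2:=a) (x3:=b) (x4:=s2) H0 p0 p1 H1 (flipE H4) (flipE H7) (flipE H3) (flipE H6) n11 n18 d21).
              }
              {
                case H8: (E c s2).
                {
                  by apply: (dartC (x0:=v) (x1:=b) (x2:=a) (x3:=c) (x4:=s2) p1 p0 p2 H1 (flipE H4) (flipE H8) (flipE n11) n13 n12 H7 d22).
                }
                {
                  by apply: (forkC (x0:=x) (x1:=b) (x2:=c) (x3:=a) (x4:=s2) p4 p5 p9 (flipE H4) n14 n13 (flipE n11) H7 (flipE n12) H8 d23).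
                }
              }
            }
          }
          {
            by apply: (forkC (x0:=x) (x1:=s1) (x2:=s3) (x3:=a) (x4:=s2) p8 p10 p9 (flipE H4) n14 n19 (flipE H3) n18 (flipE H5) (flipE n20) d25).
          }
        }
        {
          case H5: (E a s3).
          {
            by apply: (forkC (x0:=v) (x1:=s1) (x2:=s2) (x3:=s3) (x4:=a) H0 H1 p0 H5 H2 n18 n19 (flipE H3) n20 (flipE H4) d24).
          }
          {
            case H6: (E b s1).
            {
              case H7: (E b s2).
              {
                by apply: (dartC (x0:=v) (x1:=a) (x2:=s1) (x3:=s2) (x4:=b) p0 H0 H1 p1 H6 H7 H3 H4 n18 n11 d24).
              }
              {
                case H8: (E b s3).
                {
                  by apply: (forkC (x0:=v) (x1:=a) (x2:=s2) (x3:=s3) (x4:=b) p0 H1 p1 H8 H2 H4 H5 n11 n20 (flipE H7) (nsym (dist_neq p9 n14))).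
                }
                {
                  case H9: (E c s1).
                  {
                    by apply: (dartC (x0:=v) (x1:=a) (x2:=b) (x3:=c) (x4:=s1) p0 p1 p2 H0 (flipE H6) (flipE H9) n11 n12 n13 H3 d23).
                  }
                  {
                    case H10: (E c s3).
                    {
                      by apply: (forkC (x0:=v) (x1:=a) (x2:=b) (x3:=s3) (x4:=c) p0 p1 p2 H10 H2 n11 H5 n12 H8 n13 d21).
                    }
                    {
                      case H11: (E x2 s3).
                      {
                        by apply: (dartC (x0:=x) (x1:=b) (x2:=c) (x3:=s3) (x4:=x2) p4 p5 p10 p3 p7 H11 n13 H8 H10 (flipE n15) (dist_neq p2 H2)).
                      }
                      {
                        by apply: (forkC (x0:=x) (x1:=b) (x2:=s3) (x3:=a) (x4:=x2) p4 p10 p3 p6 n14 H8 (flipE n11) (flipE n15) (flipE H5) (flipE H11) (dist_neq p1 H2)).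
                      }
                    }
                  }
                }
              }
            }
            {
              case H7: (E b s3).
              {
                by apply: (forkC (x0:=v) (x1:=a) (x2:=s1) (x3:=s3) (x4:=b) p0 H0 p1 H7 H2 H3 H5 n11 n19 (flipE H6) (nsym (dist_neq p8 n14))).
              }
              {
                case H8: (E c s3).
                {
                  by apply: (forkC (x0:=v) (x1:=a) (x2:=b) (x3:=s3) (x4:=c) p0 p1 p2 H8 H2 n11 H5 n12 H7 n13 d21).
                }
                {
                  case H9: (E x2 s3).
                  {
                    by apply: (dartC (x0:=x) (x1:=b) (x2:=c) (x3:=s3) (x4:=x2) p4 p5 p10 p3 p7 H9 n13 H7 H8 (flipE n15) (dist_neq p2 H2)).
                  }
                  {
                    by apply: (forkC (x0:=x) (x1:=b) (x2:=s3) (x3:=a) (x4:=x2) p4 p10 p3 p6 n14 H7 (flipE n11) (flipE n15) (flipE H5) (flipE H9) (dist_neq p1 H2)).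
                  }
                }
              }
            }
          }
        }
      }
    }
  }
  {
    case H2: (E v s3).
    {
      case H3: (E a s1).
      {
        case H4: (E a s2).
        {
          case H5: (E a s3).
          {
            by apply: (dartC (x0:=a) (x1:=s2) (x2:=s1) (x3:=s3) (x4:=v) H4 H3 H5 (flipE p0) H0 H2 (flipE n18) n20 n19 (flipE H1) d25).
          }
          {
            case H6: (E b s1).
            {
              case H7: (E c s1).
              {
                by apply: (dartC (x0:=s1) (x1:=a) (x2:=b) (x3:=c) (x4:=x) (flipE H3) (flipE H6) (flipE H7) (flipE p8) p4 p5 n11 n12 n13 (flipE n14) d23).
              }
              {
                by apply: (dartC (x0:=v) (x1:=c) (x2:=a) (x3:=b) (x4:=s1) p2 p0 p1 H0 (flipE H3) (flipE H6) (flipE n12) (flipE n13) n11 H7 d21).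
              }
            }
            {
              case H7: (E c s1).
              {
                by apply: (dartC (x0:=v) (x1:=b) (x2:=a) (x3:=c) (x4:=s1) p1 p0 p2 H0 (flipE H3) (flipE H7) (flipE n11) n13 n12 H6 d22).
              }
              {
                by apply: (forkC (x0:=x) (x1:=b) (x2:=c) (x3:=a) (x4:=s1) p4 p5 p8 (flipE H3) n14 n13 (flipE n11) H6 (flipE n12) H7 d23).
              }
            }
          }
        }
        {
          case H5: (E a s3).
          {
            case H6: (E b s1).
            {
              case H7: (E c s1).
              {
                by apply: (dartC (x0:=s1) (x1:=a) (x2:=b) (x3:=c) (x4:=x) (flipE H3) (flipE H6) (flipE H7) (flipE p8) p4 p5 n11 n12 n13 (flipE n14) d23).
              }
              {
                by apply: (dartC (x0:=v) (x1:=c) (x2:=a) (x3:=b) (x4:=s1) p2 p0 p1 H0 (flipE H3) (flipE H6) (flipE n12) (flipE n13) n11 H7 d21).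
              }
            }
            {
              case H7: (E c s1).
              {
                by apply: (dartC (x0:=v) (x1:=b) (x2:=a) (x3:=c) (x4:=s1) p1 p0 p2 H0 (flipE H3) (flipE H7) (flipE n11) n13 n12 H6 d22).
              }
              {
                by apply: (forkC (x0:=x) (x1:=b) (x2:=c) (x3:=a) (x4:=s1) p4 p5 p8 (flipE H3) n14 n13 (flipE n11) H6 (flipE n12) H7 d23).
              }
            }
          }
          {
            by apply: (forkC (x0:=x) (x1:=s2) (x2:=s3) (x3:=a) (x4:=s1) p9 p10 p8 (flipE H3) n14 n20 (flipE H4) (flipE n18) (flipE H5) (flipE n19) d26).
          }
        }
      }
      {
        case H4: (E a s2).
        {
          case H5: (E a s3).
          {
            case H6: (E b s1).
            {
              case H7: (E c s1).
              {
                by apply: (dartC (x0:=v) (x1:=a) (x2:=b) (x3:=c) (x4:=s1) p0 p1 p2 H0 (flipE H6) (flipE H7) n11 n12 n13 H3 d23).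
              }
              {
                case H8: (E c s3).
                {
                  by apply: (dartC (x0:=v) (x1:=s1) (x2:=a) (x3:=c) (x4:=s3) H0 p0 p2 H2 (flipE H5) (flipE H8) (flipE H3) (flipE H7) n12 n19 d22).
                }
                {
                  by apply: (forkC (x0:=x) (x1:=c) (x2:=s1) (x3:=a) (x4:=s3) p5 p8 p10 (flipE H5) n14 H7 (flipE n12) H8 (flipE H3) n19 (nsym (dist_neq H6 n13))).
                }
              }
            }
            {
              case H7: (E b s3).
              {
                by apply: (dartC (x0:=v) (x1:=s1) (x2:=a) (x3:=b) (x4:=s3) H0 p0 p1 H2 (flipE H5) (flipE H7) (flipE H3) (flipE H6) n11 n19 d21).
              }
              {
                case H8: (E c s3).
                {
                  by apply: (dartC (x0:=v) (x1:=b) (x2:=a) (x3:=c) (x4:=s3) p1 p0 p2 H2 (flipE H5) (flipE H8) (flipE n11) n13 n12 H7 d22).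
                }
                {
                  by apply: (forkC (x0:=x) (x1:=b) (x2:=c) (x3:=a) (x4:=s3) p4 p5 p10 (flipE H5) n14 n13 (flipE n11) H7 (flipE n12) H8 d23).
                }
              }
            }
          }
          {
            by apply: (forkC (x0:=v) (x1:=s1) (x2:=s3) (x3:=s2) (x4:=a) H0 H2 p0 H4 H1 n19 n18 (flipE H3) (flipE n20) (flipE H5) d25).
          }
        }
        {
          case H5: (E a s3).
          {
            by apply: (forkC (x0:=x) (x1:=s1) (x2:=s2) (x3:=a) (x4:=s3) p8 p9 p10 (flipE H5) n14 n18 (flipE H3) n19 (flipE H4) n20 d24).
          }
          {
            case H6: (E b s1).
            {
              case H7: (E b s3).
              {
                by apply: (dartC (x0:=v) (x1:=a) (x2:=s1) (x3:=s3) (x4:=b) p0 H0 H2 p1 H6 H7 H3 H5 n19 n11 d25).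
              }
              {
                case H8: (E b s2).
                {
                  by apply: (forkC (x0:=v) (x1:=a) (x2:=s3) (x3:=s2) (x4:=b) p0 H2 p1 H8 H1 H5 H4 n11 (flipE n20) (flipE H7) (nsym (dist_neq p10 n14))).
                }
                {
                  case H9: (E c s1).
                  {
                    by apply: (dartC (x0:=v) (x1:=a) (x2:=b) (x3:=c) (x4:=s1) p0 p1 p2 H0 (flipE H6) (flipE H9) n11 n12 n13 H3 d23).
                  }
                  {
                    case H10: (E c s2).
                    {
                      by apply: (forkC (x0:=v) (x1:=a) (x2:=b) (x3:=s2) (x4:=c) p0 p1 p2 H10 H1 n11 H4 n12 H8 n13 d21).
                    }
                    {
                      case H11: (E x2 s2).
                      {
                        by apply: (dartC (x0:=x) (x1:=b) (x2:=c) (x3:=s2) (x4:=x2) p4 p5 p9 p3 p7 H11 n13 H8 H10 (flipE n15) (dist_neq p2 H1)).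
                      }
                      {
                        by apply: (forkC (x0:=x) (x1:=b) (x2:=s2) (x3:=a) (x4:=x2) p4 p9 p3 p6 n14 H8 (flipE n11) (flipE n15) (flipE H4) (flipE H11) (dist_neq p1 H1)).
                      }
                    }
                  }
                }
              }
            }
            {
              case H7: (E b s2).
              {
                by apply: (forkC (x0:=v) (x1:=a) (x2:=s1) (x3:=s2) (x4:=b) p0 H0 p1 H7 H1 H3 H4 n11 n18 (flipE H6) (nsym (dist_neq p8 n14))).
              }
              {
                case H8: (E c s2).
                {
                  by apply: (forkC (x0:=v) (x1:=a) (x2:=b) (x3:=s2) (x4:=c) p0 p1 p2 H8 H1 n11 H4 n12 H7 n13 d21).
                }
                {
                  case H9: (E x2 s2).
                  {
                    by apply: (dartC (x0:=x) (x1:=b) (x2:=c) (x3:=s2) (x4:=x2) p4 p5 p9 p3 p7 H9 n13 H7 H8 (flipE n15) (dist_neq p2 H1)).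
                  }
                  {
                    by apply: (forkC (x0:=x) (x1:=b) (x2:=s2) (x3:=a) (x4:=x2) p4 p9 p3 p6 n14 H7 (flipE n11) (flipE n15) (flipE H4) (flipE H9) (dist_neq p1 H1)).
                  }
                }
              }
            }
          }
        }
      }
    }
    {
      by apply: (forkC (x0:=x) (x1:=s2) (x2:=s3) (x3:=v) (x4:=s1) p9 p10 p8 (flipE H0) n16 n20 (flipE H1) (flipE n18) (flipE H2) (flipE n19) d26).
    }
  }
}
{
  case H1: (E v s2).
  {
    case H2: (E v s3).
    {
      case H3: (E a s1).
      {
        case H4: (E a s2).
        {
          case H5: (E a s3).
          {
            by apply: (dartC (x0:=a) (x1:=s1) (x2:=s2) (x3:=s3) (x4:=v) H3 H4 H5 (flipE p0) H1 H2 n18 n19 n20 (flipE H0) d26).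
          }
          {
            case H6: (E b s1).
            {
              case H7: (E c s1).
              {
                by apply: (dartC (x0:=s1) (x1:=a) (x2:=b) (x3:=c) (x4:=x) (flipE H3) (flipE H6) (flipE H7) (flipE p8) p4 p5 n11 n12 n13 (flipE n14) d23).
              }
              {
                case H8: (E b s2).
                {
                  case H9: (E b s3).
                  {
                    by apply: (dartC (x0:=b) (x1:=s1) (x2:=s2) (x3:=s3) (x4:=v) H6 H8 H9 (flipE p1) H1 H2 n18 n19 n20 (flipE H0) d26).
                  }
                  {
                    by apply: (dartC (x0:=v) (x1:=s3) (x2:=a) (x3:=b) (x4:=s2) H2 p0 p1 H1 (flipE H4) (flipE H8) (flipE H5) (flipE H9) n11 (flipE n20) d21).
                  }
                }
                {
                  case H9: (E b s3).
                  {
                    by apply: (dartC (x0:=x) (x1:=s2) (x2:=s1) (x3:=s3) (x4:=b) p9 p8 p10 p4 H6 H9 (flipE n18) n20 n19 (flipE H8) d25).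
                  }
                  {
                    by apply: (forkC (x0:=v) (x1:=s2) (x2:=s3) (x3:=s1) (x4:=b) H1 H2 p1 H6 H0 n20 (flipE n18) (flipE H8) (flipE n19) (flipE H9) d26).
                  }
                }
              }
            }
            {
              case H7: (E c s1).
              {
                case H8: (E b s2).
                {
                  case H9: (E b s3).
                  {
                    by apply: (dartC (x0:=x) (x1:=s1) (x2:=s2) (x3:=s3) (x4:=b) p8 p9 p10 p4 H8 H9 n18 n19 n20 (flipE H6) d26).
                  }
                  {
                    by apply: (forkC (x0:=v) (x1:=b) (x2:=s3) (x3:=s1) (x4:=a) p1 H2 p0 H3 H0 H9 H6 (flipE n11) (flipE n19) (flipE H5) (dist_neq (flipE H8) n20)).
                  }
                }
                {
                  case H9: (E c s2).
                  {
                    by apply: (dartC (x0:=v) (x1:=b) (x2:=a) (x3:=c) (x4:=s2) p1 p0 p2 H1 (flipE H4) (flipE H9) (flipE n11) n13 n12 H8 d22).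
                  }
                  {
                    by apply: (forkC (x0:=v) (x1:=b) (x2:=s2) (x3:=s1) (x4:=c) p1 H1 p2 H7 H0 H8 H6 n13 (flipE n18) (flipE H9) (nsym (dist_neq H4 n11))).
                  }
                }
              }
              {
                by apply: (forkC (x0:=v) (x1:=b) (x2:=c) (x3:=s1) (x4:=a) p1 p2 p0 H3 H0 n13 H6 (flipE n11) H7 (flipE n12) d23).
              }
            }
          }
        }
        {
          case H5: (E a s3).
          {
            case H6: (E b s1).
            {
              case H7: (E c s1).
              {
                by apply: (dartC (x0:=s1) (x1:=a) (x2:=b) (x3:=c) (x4:=x) (flipE H3) (flipE H6) (flipE H7) (flipE p8) p4 p5 n11 n12 n13 (flipE n14) d23).
              }
              {
                case H8: (E b s2).
                {
                  case H9: (E b s3).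
                  {
                    by apply: (dartC (x0:=b) (x1:=s1) (x2:=s2) (x3:=s3) (x4:=v) H6 H8 H9 (flipE p1) H1 H2 n18 n19 n20 (flipE H0) d26).
                  }
                  {
                    by apply: (dartC (x0:=x) (x1:=s3) (x2:=s1) (x3:=s2) (x4:=b) p10 p8 p9 p4 H6 H8 (flipE n19) (flipE n20) n18 (flipE H9) d24).
                  }
                }
                {
                  case H9: (E b s3).
                  {
                    by apply: (dartC (x0:=v) (x1:=s2) (x2:=a) (x3:=b) (x4:=s3) H1 p0 p1 H2 (flipE H5) (flipE H9) (flipE H4) (flipE H8) n11 n20 d21).
                  }
                  {
                    by apply: (forkC (x0:=v) (x1:=s2) (x2:=s3) (x3:=s1) (x4:=b) H1 H2 p1 H6 H0 n20 (flipE n18) (flipE H8) (flipE n19) (flipE H9) d26).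
                  }
                }
              }
            }
            {
              case H7: (E c s1).
              {
                case H8: (E b s2).
                {
                  case H9: (E b s3).
                  {
                    by apply: (dartC (x0:=x) (x1:=s1) (x2:=s2) (x3:=s3) (x4:=b) p8 p9 p10 p4 H8 H9 n18 n19 n20 (flipE H6) d26).
                  }
                  {
                    case H10: (E c s3).
                    {
                      by apply: (dartC (x0:=v) (x1:=b) (x2:=a) (x3:=c) (x4:=s3) p1 p0 p2 H2 (flipE H5) (flipE H10) (flipE n11) n13 n12 H9 d22).
                    }
                    {
                      by apply: (forkC (x0:=v) (x1:=b) (x2:=s3) (x3:=s1) (x4:=c) p1 H2 p2 H7 H0 H9 H6 n13 (flipE n19) (flipE H10) (nsym (dist_neq H5 n11))).
                    }
                  }
                }
                {
                  case H9: (E b s3).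
                  {
                    by apply: (forkC (x0:=v) (x1:=b) (x2:=s2) (x3:=s1) (x4:=a) p1 H1 p0 H3 H0 H8 H6 (flipE n11) (flipE n18) (flipE H4) (dist_neq (flipE H9) (flipE n20))).
                  }
                  {
                    case H10: (E c s3).
                    {
                      by apply: (dartC (x0:=v) (x1:=b) (x2:=a) (x3:=c) (x4:=s3) p1 p0 p2 H2 (flipE H5) (flipE H10) (flipE n11) n13 n12 H9 d22).
                    }
                    {
                      by apply: (forkC (x0:=v) (x1:=b) (x2:=s3) (x3:=s1) (x4:=c) p1 H2 p2 H7 H0 H9 H6 n13 (flipE n19) (flipE H10) (nsym (dist_neq H5 n11))).
                    }
                  }
                }
              }
              {
                by apply: (forkC (x0:=v) (x1:=b) (x2:=c) (x3:=s1) (x4:=a) p1 p2 p0 H3 H0 n13 H6 (flipE n11) H7 (flipE n12) d23).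
              }
            }
          }
          {
            by apply: (forkC (x0:=v) (x1:=s2) (x2:=s3) (x3:=s1) (x4:=a) H1 H2 p0 H3 H0 n20 (flipE n18) (flipE H4) (flipE n19) (flipE H5) d26).
          }
        }
      }
      {
        case H4: (E a s2).
        {
          case H5: (E a s3).
          {
            case H6: (E b s1).
            {
              case H7: (E c s1).
              {
                case H8: (E x2 s1).
                {
                  case H9: (E b s2).
                  {
                    case H10: (E b s3).
                    {
                      by apply: (dartC (x0:=b) (x1:=s1) (x2:=s2) (x3:=s3) (x4:=v) H6 H9 H10 (flipE p1) H1 H2 n18 n19 n20 (flipE H0) d26).
                    }
                    {
                      by apply: (dartC (x0:=x) (x1:=s3) (x2:=s1) (x3:=s2) (x4:=b) p10 p8 p9 p4 H6 H9 (flipE n19) (flipE n20) n18 (flipE H10) d24).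
                    }
                  }
                  {
                    case H10: (E b s3).
                    {
                      by apply: (dartC (x0:=x) (x1:=s2) (x2:=s1) (x3:=s3) (x4:=b) p9 p8 p10 p4 H6 H10 (flipE n18) n20 n19 (flipE H9) d25).
                    }
                    {
                      by apply: (forkC (x0:=v) (x1:=s2) (x2:=s3) (x3:=s1) (x4:=b) H1 H2 p1 H6 H0 n20 (flipE n18) (flipE H9) (flipE n19) (flipE H10) d26).
                    }
                  }
                }
                {
                  by apply: (dartC (x0:=c) (x1:=v) (x2:=x2) (x3:=s1) (x4:=x) (flipE p2) (flipE p7) H7 (flipE p5) p3 p8 (flipE n17) H0 H8 (flipE n16) (dist_neq (flipE p6) H3)).
                }
              }
              {
                by apply: (forkC (x0:=v) (x1:=a) (x2:=c) (x3:=s1) (x4:=b) p0 p2 p1 H6 H0 n12 H3 n11 H7 (flipE n13) d22).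
              }
            }
            {
              case H7: (E b s2).
              {
                case H8: (E b s3).
                {
                  by apply: (dartC (x0:=x) (x1:=s1) (x2:=s2) (x3:=s3) (x4:=b) p8 p9 p10 p4 H7 H8 n18 n19 n20 (flipE H6) d26).
                }
                {
                  by apply: (forkC (x0:=x) (x1:=b) (x2:=s1) (x3:=a) (x4:=s3) p4 p8 p10 (flipE H5) n14 H6 (flipE n11) H8 (flipE H3) n19 (dist_neq p1 H0)).
                }
              }
              {
                by apply: (forkC (x0:=x) (x1:=b) (x2:=s1) (x3:=a) (x4:=s2) p4 p8 p9 (flipE H4) n14 H6 (flipE n11) H7 (flipE H3) n18 (dist_neq p1 H0)).
              }
            }
          }
          {
            by apply: (forkC (x0:=x) (x1:=s1) (x2:=s3) (x3:=a) (x4:=s2) p8 p10 p9 (flipE H4) n14 n19 (flipE H3) n18 (flipE H5) (flipE n20) d25).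
          }
        }
        {
          case H5: (E a s3).
          {
            by apply: (forkC (x0:=x) (x1:=s1) (x2:=s2) (x3:=a) (x4:=s3) p8 p9 p10 (flipE H5) n14 n18 (flipE H3) n19 (flipE H4) n20 d24).
          }
          {
            case H6: (E b s1).
            {
              case H7: (E b s2).
              {
                case H8: (E b s3).
                {
                  by apply: (dartC (x0:=v) (x1:=a) (x2:=s2) (x3:=s3) (x4:=b) p0 H1 H2 p1 H7 H8 H4 H5 n20 n11 d26).
                }
                {
                  by apply: (forkC (x0:=v) (x1:=a) (x2:=s3) (x3:=s1) (x4:=b) p0 H2 p1 H6 H0 H5 H3 n11 (flipE n19) (flipE H8) (nsym (dist_neq p10 n14))).
                }
              }
              {
                by apply: (forkC (x0:=v) (x1:=a) (x2:=s2) (x3:=s1) (x4:=b) p0 H1 p1 H6 H0 H4 H3 n11 (flipE n18) (flipE H7) (nsym (dist_neq p9 n14))).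
              }
            }
            {
              case H7: (E c s1).
              {
                by apply: (forkC (x0:=v) (x1:=a) (x2:=b) (x3:=s1) (x4:=c) p0 p1 p2 H7 H0 n11 H3 n12 H6 n13 d21).
              }
              {
                case H8: (E x2 s1).
                {
                  by apply: (dartC (x0:=x) (x1:=b) (x2:=c) (x3:=s1) (x4:=x2) p4 p5 p8 p3 p7 H8 n13 H6 H7 (flipE n15) (dist_neq p2 H0)).
                }
                {
                  by apply: (forkC (x0:=x) (x1:=b) (x2:=s1) (x3:=a) (x4:=x2) p4 p8 p3 p6 n14 H6 (flipE n11) (flipE n15) (flipE H3) (flipE H8) (dist_neq p1 H0)).
                }
              }
            }
          }
        }
      }
    }
    {
      by apply: (forkC (x0:=x) (x1:=s1) (x2:=s3) (x3:=v) (x4:=s2) p8 p10 p9 (flipE H1) n16 n19 (flipE H0) n18 (flipE H2) (flipE n20) d25).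
    }
  }
  {
    case H2: (E v s3).
    {
      by apply: (forkC (x0:=x) (x1:=s1) (x2:=s2) (x3:=v) (x4:=s3) p8 p9 p10 (flipE H2) n16 n18 (flipE H0) n19 (flipE H1) n20 d24).
    }
    {
      case H3: (E a s1).
      {
        case H4: (E a s2).
        {
          case H5: (E a s3).
          {
            case H6: (E b s1).
            {
              case H7: (E b s2).
              {
                by apply: (dartC (x0:=b) (x1:=v) (x2:=s1) (x3:=s2) (x4:=x) (flipE p1) H6 H7 (flipE p4) p8 p9 H0 H1 n18 (flipE n16) d24).
              }
              {
                case H8: (E b s3).
                {
                  by apply: (dartC (x0:=b) (x1:=v) (x2:=s1) (x3:=s3) (x4:=x) (flipE p1) H6 H8 (flipE p4) p8 p10 H0 H2 n19 (flipE n16) d25).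
                }
                {
                  by apply: (forkC (x0:=a) (x1:=s2) (x2:=s3) (x3:=b) (x4:=v) H4 H5 (flipE p0) p1 n11 n20 (flipE H7) (flipE H1) (flipE H8) (flipE H2) d26).
                }
              }
            }
            {
              case H7: (E b s2).
              {
                case H8: (E b s3).
                {
                  by apply: (dartC (x0:=b) (x1:=v) (x2:=s2) (x3:=s3) (x4:=x) (flipE p1) H7 H8 (flipE p4) p9 p10 H1 H2 n20 (flipE n16) d26).
                }
                {
                  by apply: (forkC (x0:=a) (x1:=s1) (x2:=s3) (x3:=b) (x4:=v) H3 H5 (flipE p0) p1 n11 n19 (flipE H6) (flipE H0) (flipE H8) (flipE H2) d25).
                }
              }
              {
                by apply: (forkC (x0:=a) (x1:=s1) (x2:=s2) (x3:=b) (x4:=v) H3 H4 (flipE p0) p1 n11 n18 (flipE H6) (flipE H0) (flipE H7) (flipE H1) d24).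
              }
            }
          }
          {
            case H6: (E b s1).
            {
              case H7: (E b s2).
              {
                by apply: (dartC (x0:=b) (x1:=v) (x2:=s1) (x3:=s2) (x4:=x) (flipE p1) H6 H7 (flipE p4) p8 p9 H0 H1 n18 (flipE n16) d24).
              }
              {
                case H8: (E b s3).
                {
                  by apply: (dartC (x0:=b) (x1:=v) (x2:=s1) (x3:=s3) (x4:=x) (flipE p1) H6 H8 (flipE p4) p8 p10 H0 H2 n19 (flipE n16) d25).
                }
                {
                  by apply: (forkC (x0:=x) (x1:=b) (x2:=s3) (x3:=a) (x4:=s2) p4 p10 p9 (flipE H4) n14 H8 (flipE n11) H7 (flipE H5) (flipE n20) (dist_neq p1 H2)).
                }
              }
            }
            {
              case H7: (E b s2).
              {
                case H8: (E b s3).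
                {
                  by apply: (dartC (x0:=b) (x1:=v) (x2:=s2) (x3:=s3) (x4:=x) (flipE p1) H7 H8 (flipE p4) p9 p10 H1 H2 n20 (flipE n16) d26).
                }
                {
                  by apply: (forkC (x0:=x) (x1:=b) (x2:=s3) (x3:=a) (x4:=s1) p4 p10 p8 (flipE H3) n14 H8 (flipE n11) H6 (flipE H5) (flipE n19) (dist_neq p1 H2)).
                }
              }
              {
                by apply: (forkC (x0:=a) (x1:=s1) (x2:=s2) (x3:=b) (x4:=v) H3 H4 (flipE p0) p1 n11 n18 (flipE H6) (flipE H0) (flipE H7) (flipE H1) d24).
              }
            }
          }
        }
        {
          case H5: (E a s3).
          {
            case H6: (E b s1).
            {
              case H7: (E b s2).
              {
                by apply: (dartC (x0:=b) (x1:=v) (x2:=s1) (x3:=s2) (x4:=x) (flipE p1) H6 H7 (flipE p4) p8 p9 H0 H1 n18 (flipE n16) d24).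
              }
              {
                case H8: (E b s3).
                {
                  by apply: (dartC (x0:=b) (x1:=v) (x2:=s1) (x3:=s3) (x4:=x) (flipE p1) H6 H8 (flipE p4) p8 p10 H0 H2 n19 (flipE n16) d25).
                }
                {
                  by apply: (forkC (x0:=x) (x1:=b) (x2:=s2) (x3:=a) (x4:=s3) p4 p9 p10 (flipE H5) n14 H7 (flipE n11) H8 (flipE H4) n20 (dist_neq p1 H1)).
                }
              }
            }
            {
              case H7: (E b s2).
              {
                case H8: (E b s3).
                {
                  by apply: (dartC (x0:=b) (x1:=v) (x2:=s2) (x3:=s3) (x4:=x) (flipE p1) H7 H8 (flipE p4) p9 p10 H1 H2 n20 (flipE n16) d26).
                }
                {
                  by apply: (forkC (x0:=a) (x1:=s1) (x2:=s3) (x3:=b) (x4:=v) H3 H5 (flipE p0) p1 n11 n19 (flipE H6) (flipE H0) (flipE H8) (flipE H2) d25).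
                }
              }
              {
                by apply: (forkC (x0:=x) (x1:=b) (x2:=s2) (x3:=a) (x4:=s1) p4 p9 p8 (flipE H3) n14 H7 (flipE n11) H6 (flipE H4) (flipE n18) (dist_neq p1 H1)).
              }
            }
          }
          {
            by apply: (forkC (x0:=x) (x1:=s2) (x2:=s3) (x3:=a) (x4:=s1) p9 p10 p8 (flipE H3) n14 n20 (flipE H4) (flipE n18) (flipE H5) (flipE n19) d26).
          }
        }
      }
      {
        case H4: (E a s2).
        {
          case H5: (E a s3).
          {
            case H6: (E b s1).
            {
              case H7: (E b s2).
              {
                by apply: (dartC (x0:=b) (x1:=v) (x2:=s1) (x3:=s2) (x4:=x) (flipE p1) H6 H7 (flipE p4) p8 p9 H0 H1 n18 (flipE n16) d24).
              }
              {
                case H8: (E b s3).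
                {
                  by apply: (dartC (x0:=b) (x1:=v) (x2:=s1) (x3:=s3) (x4:=x) (flipE p1) H6 H8 (flipE p4) p8 p10 H0 H2 n19 (flipE n16) d25).
                }
                {
                  by apply: (forkC (x0:=a) (x1:=s2) (x2:=s3) (x3:=b) (x4:=v) H4 H5 (flipE p0) p1 n11 n20 (flipE H7) (flipE H1) (flipE H8) (flipE H2) d26).
                }
              }
            }
            {
              case H7: (E b s2).
              {
                case H8: (E b s3).
                {
                  by apply: (dartC (x0:=b) (x1:=v) (x2:=s2) (x3:=s3) (x4:=x) (flipE p1) H7 H8 (flipE p4) p9 p10 H1 H2 n20 (flipE n16) d26).
                }
                {
                  by apply: (forkC (x0:=x) (x1:=b) (x2:=s1) (x3:=a) (x4:=s3) p4 p8 p10 (flipE H5) n14 H6 (flipE n11) H8 (flipE H3) n19 (dist_neq p1 H0)).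
                }
              }
              {
                by apply: (forkC (x0:=x) (x1:=b) (x2:=s1) (x3:=a) (x4:=s2) p4 p8 p9 (flipE H4) n14 H6 (flipE n11) H7 (flipE H3) n18 (dist_neq p1 H0)).
              }
            }
          }
          {
            by apply: (forkC (x0:=x) (x1:=s1) (x2:=s3) (x3:=a) (x4:=s2) p8 p10 p9 (flipE H4) n14 n19 (flipE H3) n18 (flipE H5) (flipE n20) d25).
          }
        }
        {
          case H5: (E a s3).
          {
            by apply: (forkC (x0:=x) (x1:=s1) (x2:=s2) (x3:=a) (x4:=s3) p8 p9 p10 (flipE H5) n14 n18 (flipE H3) n19 (flipE H4) n20 d24).
          }
          {
            case H6: (E b s1).
            {
              case H7: (E b s2).
              {
                by apply: (forkC (x0:=b) (x1:=s1) (x2:=s2) (x3:=a) (x4:=v) H6 H7 (flipE p1) p0 (flipE n11) n18 (flipE H3) (flipE H0) (flipE H4) (flipE H1) d24).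
              }
              {
                case H8: (E b s3).
                {
                  by apply: (forkC (x0:=b) (x1:=s1) (x2:=s3) (x3:=a) (x4:=v) H6 H8 (flipE p1) p0 (flipE n11) n19 (flipE H3) (flipE H0) (flipE H5) (flipE H2) d25).
                }
                {
                  by apply: (forkC (x0:=x) (x1:=s2) (x2:=s3) (x3:=v) (x4:=b) p9 p10 p4 (flipE p1) n16 n20 (flipE H1) (flipE H7) (flipE H2) (flipE H8) d26).
                }
              }
            }
            {
              case H7: (E b s2).
              {
                case H8: (E b s3).
                {
                  by apply: (forkC (x0:=b) (x1:=s2) (x2:=s3) (x3:=a) (x4:=v) H7 H8 (flipE p1) p0 (flipE n11) n20 (flipE H4) (flipE H1) (flipE H5) (flipE H2) d26).
                }
                {
                  by apply: (forkC (x0:=x) (x1:=s1) (x2:=s3) (x3:=v) (x4:=b) p8 p10 p4 (flipE p1) n16 n19 (flipE H0) (flipE H6) (flipE H2) (flipE H8) d25).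
                }
              }
              {
                by apply: (forkC (x0:=x) (x1:=s1) (x2:=s2) (x3:=v) (x4:=b) p8 p9 p4 (flipE p1) n16 n18 (flipE H0) (flipE H6) (flipE H1) (flipE H7) d24).
              }
            }
          }
        }
      }
    }
  }
}
Qed.

Lemma cf4 (x1 p q z1 z2 z3 : T) :
  (E x1 p) ->
  (E x1 q) ->
  (E z2 x1) ->
  (E z1 z2) ->
  (E z2 z3) ->
  (~~ E p q) ->
  (~~ E z1 z3) ->
  (~~ E z1 p) ->
  (~~ E z1 q) ->
  (~~ E z2 p) ->
  (~~ E z2 q) ->
  (~~ E z3 p) ->
  (~~ E z3 q) ->
  (p != q) ->
  (z1 != z3) -> False.
Proof.
move=> p0 p1 p2 p3 p4 n5 n6 n7 n8 n9 n10 n11 n12 d13 d14.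
move/negbTE: n5 => n5.
move/negbTE: n6 => n6.
move/negbTE: n7 => n7.
move/negbTE: n8 => n8.
move/negbTE: n9 => n9.
move/negbTE: n10 => n10.
move/negbTE: n11 => n11.
move/negbTE: n12 => n12.
case H0: (E x1 z1).
{
  case H1: (E x1 z3).
  {
    by apply: (dartC (x0:=x1) (x1:=p) (x2:=z1) (x3:=z3) (x4:=z2) p0 H0 H1 (flipE p2) (flipE p3) p4 (flipE n7) (flipE n11) n6 (flipE n9) d14).
  }
  {
    by apply: (forkC (x0:=x1) (x1:=p) (x2:=q) (x3:=z3) (x4:=z2) p0 p1 (flipE p2) p4 H1 n5 (flipE n11) (flipE n9) (flipE n12) (flipE n10) d13).
  }
}
{
  by apply: (forkC (x0:=x1) (x1:=p) (x2:=q) (x3:=z1) (x4:=z2) p0 p1 (flipE p2) (flipE p3) H0 n5 (flipE n7) (flipE n9) (flipE n8) (flipE n10) d13).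
}
Qed.

Lemma cf5a (r v a b z : T) :
  (E r v) ->
  (E r a) ->
  (E r b) ->
  (E r z) ->
  (E v a) ->
  (E v b) ->
  (~~ E a b) ->
  (~~ E z a) ->
  (~~ E z b) ->
  (~~ E z v) ->
  (a != b) -> False.
Proof.
move=> p0 p1 p2 p3 p4 p5 n6 n7 n8 n9 d10.
move/negbTE: n6 => n6.
move/negbTE: n7 => n7.
move/negbTE: n8 => n8.
move/negbTE: n9 => n9.
by apply: (dartC (x0:=r) (x1:=z) (x2:=a) (x3:=b) (x4:=v) p3 p1 p2 p0 p4 p5 n7 n8 n6 n9 d10).
Qed.

Lemma cf5b (x1 p q x0 z : T) :
  (E x1 p) ->
  (E x1 q) ->
  (E x0 x1) ->
  (E z x0) ->
  (~~ E p q) ->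
  (~~ E x0 p) ->
  (~~ E x0 q) ->
  (~~ E z p) ->
  (~~ E z q) ->
  (~~ E z x1) ->
  (p != q) -> False.
Proof.
move=> p0 p1 p2 p3 n4 n5 n6 n7 n8 n9 d10.
move/negbTE: n4 => n4.
move/negbTE: n5 => n5.
move/negbTE: n6 => n6.
move/negbTE: n7 => n7.
move/negbTE: n8 => n8.
move/negbTE: n9 => n9.
by apply: (forkC (x0:=x1) (x1:=p) (x2:=q) (x3:=z) (x4:=x0) p0 p1 (flipE p2) (flipE p3) (flipE n9) n4 (flipE n7) (flipE n5) (flipE n8) (flipE n6) d10).
Qed.


Definition om (S : {set T}) : nat :=
  \max_(W : {set T} | (W \subset S) && clique E W) #|W|.

Definition good (S : {set T}) (k : nat) : Prop :=
  exists c : T -> nat, (forall x, x \in S -> c x < k) /\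
    (forall x y, x \in S -> y \in S -> E x y -> c x != c y).

Lemma cliqueP (W : {set T}) :
  reflect (forall x y, x \in W -> y \in W -> x != y -> E x y) (clique E W).
Proof.
apply: (iffP forall_inP) => [h x y xW yW nxy | h x xW].
  by move: (h x xW) => /forall_inP /(_ y yW) /implyP; apply.
by apply/forall_inP => y yW; apply/implyP; apply: h.
Qed.

Lemma om_le (S W : {set T}) : W \subset S -> clique E W -> #|W| <= om S.
Proof. by move=> WS cW; apply: (leq_bigmax_cond W); rewrite WS cW. Qed.

Lemma om_mono (S1 S2 : {set T}) : S1 \subset S2 -> om S1 <= om S2.
Proof.
move=> s12; apply/bigmax_leqP => W /andP[WS cW]; apply: om_le => //.
exact: subset_trans s12.
Qed.

Lemma om_pos (S : {set T}) x : x \in S -> 0 < om S.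
Proof.
move=> xS; apply: (@leq_trans #|[set x]|); first by rewrite cards1.
apply: om_le; first by rewrite sub1set.
by apply/cliqueP => y z; rewrite !in_set1 => /eqP-> /eqP->; rewrite eqxx.
Qed.

Lemma om_ext (S W : {set T}) u : W \subset S -> clique E W -> u \in S -> u \notin W ->
  (forall w, w \in W -> E u w) -> #|W| < om S.
Proof.
move=> WS cW uS uW adj.
have -> : #|W|.+1 = #|u |: W| by rewrite cardsU1 uW.
apply: om_le; first by rewrite subUset sub1set uS.
apply/cliqueP => x y; rewrite !in_setU1.
case/orP => [/eqP->|xW]; case/orP => [/eqP->|yW]; rewrite ?eqxx //.
- by move=> _; apply: adj.
- by move=> _; rewrite Esym; apply: adj.
- by move/cliqueP: cW; apply.
Qed.

Lemma om_lt (S S' : {set T}) : S' \subset S -> (exists x, x \in S) ->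
  (forall W : {set T}, W \subset S' -> clique E W -> exists2 u, u \in S & u \notin W /\ forall w, w \in W -> E u w) ->
  om S' < om S.
Proof.
move=> sub [x xS] h.
have p := om_pos xS.
rewrite -(prednK p) ltnS; apply/bigmax_leqP => W /andP[WS cW].
case: (h W WS cW) => u uS [uW adj].
rewrite -ltnS prednK //; apply: om_ext uS uW adj => //.
exact: subset_trans WS sub.
Qed.

Lemma free_col (s : seq nat) m : size s < m -> exists2 i, i < m & i \notin s.
Proof.
move=> sz; case: (boolP [exists i : 'I_m, (i : nat) \notin s]) => [/existsP [i hi]|/existsPn h].
  by exists i.
have: size (iota 0 m) <= size s.
  apply: uniq_leq_size; first exact: iota_uniq.
  move=> i; rewrite mem_iota add0n /= => lim.
  by have := h (Ordinal lim); rewrite negbK.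
by rewrite size_iota leqNgt sz.
Qed.

Lemma ramsey k (N : {set T}) :
  (forall x y z, x \in N -> y \in N -> z \in N -> x != y -> x != z -> y != z -> [|| E x y, E x z | E y z]) ->
  (forall W : {set T}, W \subset N -> clique E W -> #|W| <= k) -> #|N| <= k * k.+2.
Proof.
elim: k N => [|k IH] N st cl.
  case: (set_0Vmem N) => [->|[y yN]]; first by rewrite cards0.
  have := cl [set y]; rewrite cards1 sub1set yN => /(_ isT) h.
  suff : 1 <= 0 by [].
  by apply: h; apply/cliqueP => a b; rewrite !in_set1 => /eqP-> /eqP->; rewrite eqxx.
case: (set_0Vmem N) => [->|[y yN]]; first by rewrite cards0.
pose N1 := [set z in N | E y z]; pose N2 := [set z in N | (z != y) && ~~ E y z].
have sub : N \subset y |: (N1 :|: N2).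
  apply/subsetP => z zN; rewrite !in_setU1 !in_setU !in_set zN /=.
  by case: eqP => //= _; case: (E y z).
have c2 : #|N2| <= k.+1.
  apply: cl; first by apply/subsetP => z; rewrite in_set => /andP[].
  apply/cliqueP => a b; rewrite !in_set => /and3P[aN ay nya] /and3P[bN by_ nyb] nab.
  have := st y a b yN aN bN; rewrite eq_sym ay eq_sym by_ nab => /(_ isT isT isT).
  by rewrite (negbTE nya) (negbTE nyb).
have c1 : #|N1| <= k * k.+2.
  apply: IH.
    move=> a b c; rewrite !in_set => /andP[aN _] /andP[bN _] /andP[cN _]; exact: st.
  move=> W WN cW; rewrite -ltnS.
  have yW : y \notin W by apply/negP => /(subsetP WN); rewrite in_set Eirr andbF.
  have -> : #|W|.+1 = #|y |: W| by rewrite cardsU1 yW.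
  apply: cl; first by rewrite subUset sub1set yN; apply: subset_trans WN _; apply/subsetP => z; rewrite in_set => /andP[].
  apply/cliqueP => a b; rewrite !in_setU1.
  case/orP => [/eqP->|aW]; case/orP => [/eqP->|bW]; rewrite ?eqxx //.
  - by move=> _; have := subsetP WN b bW; rewrite in_set => /andP[].
  - by move=> _; have := subsetP WN a aW; rewrite in_set Esym => /andP[].
  - by move/cliqueP: cW; apply.
apply: (leq_trans (subset_leq_card sub)).
rewrite cardsU1; apply: (@leq_trans (1 + (#|N1| + #|N2|))).
  by rewrite leq_add ?leq_b1 // (leq_card_setU N1 N2).1.
have := leq_add c1 c2; move: (#|N1| + #|N2|) => n; nia.
Qed.

Definition nbr (S : {set T}) u := [set y in S | E u y].
Definition st3 (S : {set T}) u := [exists a in nbr S u, exists b in nbr S u, exists c in nbr S u,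
  [&& a != b, a != c, b != c, ~~ E a b, ~~ E a c & ~~ E b c]].

Lemma sqr_mono m n : m <= n -> m ^ 2 <= n ^ 2.
Proof. by move=> h; rewrite leq_exp2r. Qed.

Lemma redA (S : {set T}) u : u \in S -> ~~ st3 S u -> good (S :\ u) (om (S :\ u) ^ 2) -> good S (om S ^ 2).
Proof.
move=> uS nst [c [cb cp]].
set N := nbr S u.
have p0 := om_pos uS.
have cardN : #|N| < om S ^ 2.
  have := @ramsey (om S).-1 N.
  have h1 : (forall x y z, x \in N -> y \in N -> z \in N -> x != y -> x != z -> y != z -> [|| E x y, E x z | E y z]).
    move=> x y z xN yN zN nxy nxz nyz; apply: contraNT nst => h.
    apply/existsP; exists x; rewrite xN /=; apply/existsP; exists y; rewrite yN /=.
    apply/existsP; exists z; rewrite zN nxy nxz nyz /=.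
    by move: h; case: (E x y); case: (E x z); case: (E y z).
  move=> /(_ h1) h2.
  have : #|N| <= (om S).-1 * (om S).-1.+2.
    apply: h2 => W WN cW; rewrite -ltnS prednK //.
    apply: om_ext uS _ _ => //.
    - by apply: subset_trans WN _; apply/subsetP => z; rewrite in_set => /andP[].
    - by apply/negP => /(subsetP WN); rewrite in_set Eirr andbF.
    - by move=> w /(subsetP WN); rewrite in_set => /andP[].
  move: (om S) p0 => p p0 hh; apply: (leq_ltn_trans hh).
  by case: p p0 {hh} => // p _ /=; rewrite expnS expn1; nia.
have [i ilt inot] : exists2 i, i < om S ^ 2 & i \notin [seq c y | y <- enum N].
  by apply: free_col; rewrite size_map -cardE.
exists (fun x => if x == u then i else c x); split.
  move=> x xS; case: eqP => // /eqP xu.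
  apply: (leq_trans (cb x _)); first by rewrite in_setD1 xu.
  by apply: sqr_mono; apply: om_mono; apply: subsetDl.
have key : forall y, y \in S -> E u y -> i != c y.
  move=> y yS uy; apply: contraNneq inot => ->.
  by apply: map_f; rewrite mem_enum in_set yS.
move=> x y xS yS xy.
case: (eqVneq x u) => [exu|xu]; case: (eqVneq y u) => [eyu|yu].
- by subst; rewrite Eirr in xy.
- by subst x; apply: key.
- by subst y; rewrite eq_sym; apply: key => //; rewrite Esym.
- by apply: cp => //; rewrite in_setD1 ?xu ?yu.
Qed.

Lemma redD (S T0 : {set T}) : T0 \subset S -> (forall z w, z \in T0 -> w \in S -> E z w -> w \in T0) ->
  good T0 (om T0 ^ 2) -> good (S :\: T0) (om (S :\: T0) ^ 2) -> good S (om S ^ 2).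
Proof.
move=> TS cl [c1 [b1 p1]] [c2 [b2 p2]].
exists (fun x => if x \in T0 then c1 x else c2 x); split.
  move=> x xS; case: ifP => xT.
    by apply: (leq_trans (b1 x xT)); apply: sqr_mono; apply: om_mono.
  apply: (leq_trans (b2 x _)); first by rewrite in_setD xT.
  by apply: sqr_mono; apply: om_mono; apply: subsetDl.
move=> x y xS yS xy; case: ifP => xT; case: ifP => yT.
- exact: p1.
- by rewrite (cl x y xT yS xy) in yT.
- by rewrite (cl y x yT xS (etrans (Esym _ _) xy)) in xT.
- by apply: p2 => //; rewrite in_setD ?xT ?yT.
Qed.

Definition P3free (B : {set T}) := forall x y z, x \in B -> y \in B -> z \in B ->
  E x y -> E y z -> x != z -> E x z.

Lemma redQ (S B : {set T}) : B \subset S -> P3free B -> om (S :\: B) < om S ->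
  good (S :\: B) (om (S :\: B) ^ 2) -> good S (om S ^ 2).
Proof.
move=> BS p3 lt [c1 [b1 pr1]].
have p0 : 0 < om S by case: (om S) lt.
pose cls x := [set y in B | (y == x) || E x y].
pose cB x := #|[set y in cls x | enum_rank y < enum_rank x]|.
have clsE : forall x y, x \in B -> y \in B -> E x y -> cls x = cls y.
  have h : forall x y z, x \in B -> y \in B -> z \in B -> E x y -> (z == x) || E x z -> (z == y) || E y z.
    move=> x y z xB yB zB xy /orP[/eqP->|xz]; first by rewrite Esym xy orbT.
    case: (eqVneq z y) => //= zy; apply: (p3 y x z) => //; first by rewrite Esym.
    by rewrite eq_sym.
  move=> x y xB yB xy; apply/setP => z; rewrite !in_set.
  case zB: (z \in B) => //=; apply/idP/idP; first exact: h.
  by apply: h => //; rewrite Esym.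
have clsx : forall x, x \in B -> x \in cls x by move=> x xB; rewrite in_set xB eqxx.
have clsS : forall x, x \in B -> #|cls x| <= om S.
  move=> x xB; apply: om_le.
    by apply: subset_trans BS; apply/subsetP => y; rewrite in_set => /andP[].
  apply/cliqueP => y z; rewrite !in_set => /andP[yB /orP[/eqP->|xy]] /andP[zB /orP[/eqP->|xz]]; rewrite ?eqxx //.
    by move=> _; rewrite Esym.
  by move=> ne; apply: (p3 y x z) => //; rewrite Esym.
have cBlt : forall x, x \in B -> cB x < om S.
  move=> x xB; apply: leq_trans (clsS x xB); apply: proper_card; apply/properP; split.
    by apply/subsetP => y; rewrite in_set => /andP[].
  by exists x; [exact: clsx | rewrite in_set ltnn andbF].
have cBne : forall x y, x \in B -> y \in B -> E x y -> cB x != cB y.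
  have h : forall x y, x \in B -> y \in B -> E x y -> enum_rank x < enum_rank y -> cB x < cB y.
    move=> x y xB yB xy r; apply: proper_card; apply/properP; split.
      apply/subsetP => z; rewrite (clsE x y) // [in X in X -> _]in_set [in X in _ -> X]in_set => /andP[-> zr] /=.
      exact: ltn_trans zr r.
    exists x; last by rewrite in_set ltnn andbF.
    by rewrite in_set -(clsE x y) // clsx // r.
  move=> x y xB yB xy.
  case: (ltngtP (enum_rank x) (enum_rank y)) => r.
  - by rewrite neq_ltn h.
  - by rewrite eq_sym neq_ltn (h y x) // Esym.
  - by move/val_inj/enum_rank_inj: r => exy; rewrite exy Eirr in xy.
exists (fun x => if x \in B then (om S).-1 ^ 2 + cB x else c1 x); split.
  move=> x xS; case: ifP => xB.
    have := cBlt x xB; move: (cB x) (om S) p0 => k p p1 hk.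
    by case: p p1 hk => // p _ hk /=; rewrite -add1n in hk; nia.
  apply: (leq_trans (b1 x _)); first by rewrite in_setD xB.
  by apply: sqr_mono; apply: ltnW.
move=> x y xS yS xy; case: ifP => xB; case: ifP => yB.
- by rewrite eqn_add2l cBne.
- have := b1 y; rewrite in_setD yB yS => /(_ isT) h.
  have h' : c1 y < (om S).-1 ^ 2.
    apply: (leq_trans h); apply: sqr_mono; rewrite -ltnS prednK //.
  by rewrite neq_ltn ltn_addr ?orbT.
- have := b1 x; rewrite in_setD xB xS => /(_ isT) h.
  have h' : c1 x < (om S).-1 ^ 2.
    apply: (leq_trans h); apply: sqr_mono; rewrite -ltnS prednK //.
  by rewrite neq_ltn ltn_addr.
- by apply: pr1 => //; rewrite in_setD ?xB ?yB.
Qed.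

Lemma structure (S : {set T}) v : v \in S -> (forall u, u \in S -> st3 S u) ->
  (exists T0 : {set T}, [/\ T0 \subset S, T0 != set0, v \notin T0 &
      forall z w, z \in T0 -> w \in S -> E z w -> w \in T0])
  \/ (exists B : {set T}, [/\ B \subset S, P3free B & om (S :\: B) < om S]).
Proof.
move=> vS allst.
have sy : forall x y, E x y -> E y x by move=> x y; rewrite Esym.
have nsy : forall x y, ~~ E x y -> ~~ E y x by move=> x y; rewrite Esym.
case/exists_inP: (allst v vS) => a aN /exists_inP [b bN /exists_inP [c cN]].
case/and3P => nab nac /and4P [nbc eab eac ebc].
have inN : forall y, (y \in nbr S v) = (y \in S) && E v y by move=> y; rewrite in_set.
move: aN bN cN; rewrite !inN => /andP[aS va] /andP[bS vb] /andP[cS vc].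
pose K := [set y in nbr S v | ~~ [&& E y a, E y b & E y c]].
pose R := nbr S v :\: K.
pose M := [set x in S | (x != v) && ~~ E v x].
pose M1 := [set x in M | [exists y in K, E x y]].
pose M0 := [set x in M :\: M1 | [exists y in M1, E x y]].
pose Z := M :\: (M1 :|: M0).
have Kf : forall y, y \in K -> [/\ y \in S, E v y & ~~ E y a || ~~ E y b || ~~ E y c].
  move=> y; rewrite in_set inN => /andP[/andP[yS vy] h]; split => //.
  by move: h; case: (E y a); case: (E y b); case: (E y c).
have Mf : forall x, x \in M -> [/\ x \in S, x != v & ~~ E x v].
  by move=> x; rewrite in_set => /and3P[-> -> ?]; split => //; apply: nsy.
have KM : forall x y, x \in M -> x \notin M1 -> y \in K -> ~~ E x y.
  move=> x y xM xM1 yK; apply: contra xM1 => xy.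
  by rewrite in_set xM; apply/exists_inP; exists y.
have inK : forall y, y \in S -> E v y -> ~~ [&& E y a, E y b & E y c] -> y \in K.
  by move=> y yS vy h; rewrite in_set inN yS vy.
have Rf : forall y, y \in R -> [/\ y \in S, E v y, E y a, E y b & E y c].
  move=> y; rewrite in_setD => /andP[yK]; rewrite inN => /andP[yS vy].
  have : [&& E y a, E y b & E y c] by apply: contraNT yK => h; exact: inK.
  by case/and3P.
have aK : a \in K by apply: inK; rewrite ?Eirr.
have bK : b \in K by apply: inK; rewrite ?Eirr ?andbF.
have cK : c \in K by apply: inK; rewrite ?Eirr ?andbF.
have part : forall w, w \in S -> [\/ w = v, w \in K, w \in R | w \in M].
  move=> w wS; case: (eqVneq w v) => [->|wv]; first by constructor 1.
  case vw: (E v w).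
    case wK: (w \in K); first by constructor 2.
    by constructor 3; rewrite in_setD wK inN wS vw.
  by constructor 4; rewrite in_set wS wv vw.
have m1 : forall x, x \in M1 -> [/\ E x a || E x b, E x a || E x c & E x b || E x c].
  move=> x; rewrite in_set => /andP[xM /exists_inP[y yK xy]].
  case/Mf: xM => xS xv xnv; case/Kf: yK => yS vy hy.
  split; apply/negPn/negP; rewrite negb_or => /andP[h1 h2].
  - by apply: (cf2 (v:=v) (a:=a) (b:=b) (c:=c) (y:=y) (x:=x)).
  - apply: (cf2 (v:=v) (a:=a) (b:=c) (c:=b) (y:=y) (x:=x));
    first [done | by rewrite eq_sym | by rewrite Esym | by move: hy; case: (E y a); case: (E y b); case: (E y c)].
  - apply: (cf2 (v:=v) (a:=b) (b:=c) (c:=a) (y:=y) (x:=x));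
    first [done | by rewrite eq_sym | by rewrite Esym | by move: hy; case: (E y a); case: (E y b); case: (E y c)].
have two : forall x, x \in M1 -> exists p q, [/\ p \in K, q \in K, p != q, ~~ E p q & E x p && E x q].
  move=> x /m1 [h1 h2 h3].
  case xa: (E x a); case xb: (E x b).
  - by exists a, b; rewrite xa xb.
  - by exists a, c; rewrite xb /= in h3; rewrite xa h3.
  - by exists b, c; rewrite xa /= in h2; rewrite xb h2.
  - by rewrite xa xb in h1.
have M1f : forall x, x \in M1 -> x \in M by move=> x; rewrite in_set => /andP[].
have M0f : forall x, x \in M0 -> [/\ x \in M, x \notin M1 & exists2 y, y \in M1 & E x y].
  move=> x; rewrite in_set in_setD => /andP[/andP[xM1 xM] /exists_inP [y yM1 xy]].
  by split => //; exists y.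
have Zf : forall z, z \in Z -> [/\ z \in M, z \notin M1 & z \notin M0].
  by move=> z; rewrite in_setD in_setU negb_or => /andP[/andP[-> ->] ->].
have inM0 : forall x y, x \in M -> x \notin M1 -> y \in M1 -> E x y -> x \in M0.
  by move=> x y xM xM1 yM1 xy; rewrite in_set in_setD xM xM1 /=; apply/exists_inP; exists y.
have Zcl : forall z w, z \in Z -> w \in S -> E z w -> w \in Z.
  move=> z w /Zf [zM zM1 zM0] wS zw.
  case/Mf: (zM) => zS zv zvn.
  case: (part w wS) => [ewv|wK|wR|wM].
  - by subst w; rewrite zw in zvn.
  - by move: (KM z w zM zM1 wK); rewrite zw.
  - case/Rf: wR => _ vw wa wb _.
    have za := KM z a zM zM1 aK; have zb := KM z b zM zM1 bK.
    by exfalso; apply: (cf5a (r:=w) (v:=v) (a:=a) (b:=b) (z:=z)); rewrite // ?(sy _ _ zw) ?(sy _ _ vw).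
  - case wM1: (w \in M1).
      by rewrite (inM0 z w zM zM1 wM1 zw) in zM0.
    case wM0: (w \in M0).
      case/M0f: wM0 => _ _ [x1 x1M1 wx1].
      case: (two x1 x1M1) => p [q [pK qK pq npq /andP[x1p x1q]]].
      case zx1: (E z x1).
        by rewrite (inM0 z x1 zM zM1 x1M1 zx1) in zM0.
      exfalso; apply: (cf5b (x1:=x1) (p:=p) (q:=q) (x0:=w) (z:=z)) => //; try by rewrite zx1.
      + by apply: KM => //; rewrite wM1.
      + by apply: KM => //; rewrite wM1.
      + exact: KM.
      + exact: KM.
    by rewrite in_setD in_setU wM1 wM0 wM.
have vM : v \notin M by rewrite in_set eqxx andbF.
case: (eqVneq Z set0) => [Z0|Zn0]; last first.
  left; exists Z; split => //.
  - by apply/subsetP => z /Zf [/Mf []].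
  - by apply: contra vM => /Zf [].
have B0 : forall w, w \in S -> w \notin K -> w \notin M0 -> [\/ w = v, w \in R | w \in M1].
  move=> w wS wK wM0; case: (part w wS) => [->|wK'|wR|wM]; first by constructor 1.
  - by rewrite wK' in wK.
  - by constructor 2.
  case wM1: (w \in M1); first by constructor 3.
  have : w \in Z by rewrite in_setD in_setU wM1 (negbTE wM0) wM.
  by rewrite Z0 in_set0.
right; exists (K :|: M0); split.
- apply/subsetP => x; rewrite in_setU => /orP[/Kf[]|/M0f[/Mf[]]] //.
- move=> x y z; rewrite !in_setU => xB yB zB xy yz xz.
  case xzE: (E x z) => //; exfalso.
  case yK: (y \in K).
    have xK : x \in K.
      case/orP: xB => // /M0f [xM xM1 _].
      by move: (KM x y xM xM1 yK); rewrite xy.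
    have zK : z \in K.
      case/orP: zB => // /M0f [zM zM1 _].
      by move: (KM z y zM zM1 yK); rewrite Esym yz.
    case/Kf: xK => _ vx cx; case/Kf: yK => _ vy cy; case/Kf: zK => _ vz cz.
    by apply: (cf1 (v:=v) (a:=a) (b:=b) (c:=c) (y1:=x) (y2:=y) (y3:=z)); rewrite ?xzE.
  have yM0 : y \in M0 by case/orP: yB => //; rewrite yK.
  case/M0f: (yM0) => yM yM1 [x1 x1M1 yx1].
  have xM0 : x \in M0.
    case/orP: xB => // xK; move: (KM y x yM yM1 xK); rewrite Esym xy.
    by [].
  have zM0 : z \in M0.
    case/orP: zB => // zK; move: (KM y z yM yM1 zK); rewrite yz.
    by [].
  case/M0f: xM0 => xM xM1 _; case/M0f: zM0 => zM zM1 _.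
  case: (two x1 x1M1) => p [q [pK qK pq npq /andP[x1p x1q]]].
  by apply: (cf4 (x1:=x1) (p:=p) (q:=q) (z1:=x) (z2:=y) (z3:=z)); rewrite ?xzE //; apply: KM.
- apply: om_lt; [exact: subsetDl | by exists v |].
  move=> W WS cW.
  have Wf : forall w, w \in W -> [\/ w = v, w \in R | w \in M1].
    move=> w /(subsetP WS); rewrite in_setD in_setU negb_or => /andP[/andP[wK wM0] wS].
    exact: B0.
  have aW : forall t, t \in K -> t \notin W.
    move=> t tK; apply/negP => /(subsetP WS); by rewrite in_setD in_setU tK.
  case vW: (v \in W).
    exists a => //; split; first exact: aW.
    move=> w wW; case: (eqVneq w v) => [->|wv]; first by rewrite Esym.
    have vw : E v w by move/cliqueP: cW; apply => //; rewrite eq_sym.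
    case: (Wf w wW) => [ewv|wR|wM1]; first by rewrite ewv eqxx in wv.
      by case/Rf: wR => _ _ wa _ _; rewrite Esym.
    by case/M1f/Mf: wM1 => _ _; rewrite Esym vw.
  have WM1 : forall w, w \in W -> ~~ E w a -> w \in M1.
    move=> w wW wa; case: (Wf w wW) => [ewv|wR|] //; first by rewrite ewv vW in wW.
    by case/Rf: wR => _ _ wa' _ _; rewrite wa' in wa.
  have WM1b : forall w, w \in W -> ~~ E w b -> w \in M1.
    move=> w wW wb; case: (Wf w wW) => [ewv|wR|] //; first by rewrite ewv vW in wW.
    by case/Rf: wR => _ _ _ wb' _; rewrite wb' in wb.
  case: (boolP [forall w in W, E w a]) => [/forall_inP Wa|/forall_inPn [wa waW nwa]].
    exists a => //; split; first exact: aW.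
    by move=> w wW; rewrite Esym; apply: Wa.
  case: (boolP [forall w in W, E w b]) => [/forall_inP Wb|/forall_inPn [wb wbW nwb]].
    exists b => //; split; first exact: aW.
    by move=> w wW; rewrite Esym; apply: Wb.
  exfalso.
  have waM1 := WM1 wa waW nwa; have wbM1 := WM1b wb wbW nwb.
  case/m1: (waM1) => ha1 ha2 ha3; case/m1: (wbM1) => hb1 hb2 hb3.
  case: (eqVneq wa wb) => [e|nab'].
    by subst wb; rewrite (negbTE nwa) (negbTE nwb) in ha1.
  have wab : E wa wb by move/cliqueP: cW; apply.
  rewrite (negbTE nwa) /= in ha1 ha2; rewrite (negbTE nwb) ?orbF /= in hb1 hb3.
  case/M1f/Mf: (waM1) => waS _ wav; case/M1f/Mf: (wbM1) => _ _ wbv.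
  case/exists_inP: (allst wa waS) => s1 s1N /exists_inP [s2 s2N /exists_inP [s3 s3N]].
  case/and3P => n12 n13 /and4P [n23 e12 e13 e23].
  move: s1N s2N s3N; rewrite !in_set => /andP[_ w1] /andP[_ w2] /andP[_ w3].
  by apply: (cf3 (v:=v) (a:=a) (b:=b) (c:=c) (x:=wa) (x2:=wb) (s1:=s1) (s2:=s2) (s3:=s3)).
Qed.

Lemma good0 (S : {set T}) : S = set0 -> good S (om S ^ 2).
Proof. by move=> ->; exists (fun _ => 0); split => x; rewrite in_set0. Qed.

Lemma main_good (S : {set T}) : good S (om S ^ 2).
Proof.
suff H : forall n (S : {set T}), #|S| <= n -> good S (om S ^ 2) by exact: (H #|S|).
elim=> [|n IH] {}S hS.
  by apply: good0; apply/eqP; rewrite -cards_eq0 -leqn0.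
case: (set_0Vmem S) => [S0|[v vS]]; first exact: good0.
case: (boolP [exists u in S, ~~ st3 S u]) => [/exists_inP [u uS nu]|/exists_inPn allst].
  apply: (redA uS nu); apply: IH.
  by move: hS; rewrite (cardsD1 u S) uS add1n ltnS.
have allst' : forall u, u \in S -> st3 S u by move=> u uS; have := allst u uS; rewrite negbK.
case: (structure vS allst') => [[T0 [T0S T0n vT0 cl]]|[B [BS p3 lt]]].
  apply: (redD T0S cl); apply: IH.
    rewrite -ltnS; apply: (leq_trans _ hS); apply: proper_card; apply/properP; split => //.
    by exists v.
  rewrite -ltnS; apply: (leq_trans _ hS); apply: proper_card; apply/properP; split; first exact: subsetDl.
  case: (set_0Vmem T0) => [T00|[x xT0]]; first by rewrite T00 eqxx in T0n.
  by exists x; [exact: (subsetP T0S) | rewrite in_setD xT0].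
apply: (redQ BS p3 lt); apply: IH.
case: (set_0Vmem B) => [B0|[x xB]]; first by rewrite B0 setD0 ltnn in lt.
rewrite -ltnS; apply: (leq_trans _ hS); apply: proper_card; apply/properP; split; first exact: subsetDl.
by exists x; [exact: (subsetP BS) | rewrite in_setD xB].
Qed.
End G.

Theorem corollary3p7 (T : finType) (E : rel T)
  (Esym : symmetric E) (Eirr : irreflexive E) :
  H_free fork E -> H_free dart E ->
  chi Eirr <= omega E ^ 2.
Proof.
move=> hf hd.
have [c [cb cp]] := main_good Esym Eirr hf hd [set: T].
have omE : om E [set: T] = omega E.
  by rewrite /om /omega; apply: eq_bigl => W; rewrite subsetT.
rewrite omE in cb.
have col : colorable E (omega E ^ 2).
  apply/existsP; exists [ffun x => Ordinal (cb x (in_setT x))].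
  apply/forallP => x; apply/forallP => y; apply/implyP => xy; rewrite !ffunE.
  by apply: (cp x y) => //; rewrite in_setT.
rewrite /chi; case: ex_minnP => m _; exact.
Qed.
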